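(* The product-preserving full embedding $G:\mathbf{cMet}_1\to{\rm PER}(\mathbf U)$ extends to an embedding of hyperdoctrines $(G,\eta):\mathbf{CMT}\to\mathrm{Sub}_{{\rm PER}(\mathbf U)}$, where $\eta_{(X,d)}$ sends a uniformly continuous $\phi:(X,d)\to[0,1]$ to the subobject of $(X,d)$ corresponding to $\phi$ viewed as a strict relation (i.e. the mono $(X,\sim_\phi)\to(X,d)$ with $x\sim_\phi x'=\max(\phi(x),d(x,x'))$). This embedding preserves all the structure of a universally coherent hyperdoctrine: the fibrewise finite meets and joins, the left adjoints $\exists$ and the right adjoints $\forall$ along projections of $\mathbf{cMet}_1$ (which exist for the image projections in $\mathrm{Sub}_{{\rm PER}(\mathbf U)}$), and equality; and each $\eta_{(X,d)}$ reflects the order.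
   Context: $\mathbf{cMet}_1$: complete metric spaces with all distances $\le 1$ and uniformly continuous maps. For $\alpha,\beta:Z\to[0,1]$, $\alpha\sqsubseteq\beta$ means: for every $\varepsilon>0$ there is $\delta>0$ with $\alpha(z)\le\delta\Rightarrow\beta(z)\le\varepsilon$ for all $z$. $\mathbf U$: the hyperdoctrine on $\mathbf{Sets}$ with $\mathbf U(X)$ all functions $X\to[0,1]$ under $\sqsubseteq$ (meet $=\max$, join $=\min$, top $=0$, $\exists=\inf$, $\forall=\sup$ over fibres), reindexing by precomposition. $\mathbf{CMT}$: the hyperdoctrine on $\mathbf{cMet}_1$ with $\mathbf{CMT}(X,d)$ the uniformly continuous maps $(X,d)\to[0,1]$ under $\sqsubseteq$, reindexing by precomposition. ${\rm PER}(\mathbf U)$, concretely: objects $(X,R)$, $R:X\times X\to[0,1]$ with $R(x,y)\sqsubseteq R(y,x)$ and $\max(R(x,y),R(y,z))\sqsubseteq R(x,z)$; morphisms are classes $[F]$ of $F:X\times Y\to[0,1]$ with $F(x,y)\sqsubseteq\max(R(x,x),S(y,y))$, $\max(F(x,y),R(x,x'),S(y,y'))\sqsubseteq F(x',y')$, $\max(F(x,y),F(x,y'))\sqsubseteq S(y,y')$, $R(x,x)\sqsubseteq\inf_yF(x,y)$, where $F\sim F'$ iff $F\sqsubseteq F'$, composed by $[(x,z)\mapsto\inf_y\max(F(x,y),H(y,z))]$. $G(X,d)=(X,d)$, $G(f)=[(x,y)\mapsto d(f(x),y)]$. A strict relation on $(X,R)$ is $\phi:X\to[0,1]$ with $\phi(x)\sqsubseteq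 R(x,x)$ and $\max(\phi(x),R(x,x'))\sqsubseteq\phi(x')$. $\mathrm{Sub}_{{\rm PER}(\mathbf U)}$ sends an object to its poset of subobjects, with reindexing by pullback. A morphism of hyperdoctrines $(F,\eta):\mathbf P\to\mathbf Q$ consists of a finite-product-preserving functor $F$ between the bases and a pseudonatural transformation $\eta:\mathbf P\to\mathbf Q\circ F^{op}$; it is an embedding if $F$ is full and faithful and every $\eta_X$ reflects the order. *)

(* Defs.v *)
From Stdlib Require Import Reals ClassicalEpsilon.
Open Scope R_scope.

Definition sq {Z : Type} (a b : Z -> R) : Prop :=
  forall eps, 0 < eps ->
    exists delta, 0 < delta /\ forall z, a z <= delta -> b z <= eps.

Definition val01 {Z : Type} (a : Z -> R) : Prop := forall z, 0 <= a z <= 1.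

(* infimum / supremum in [0,1] of a family (empty family: 1 resp. 0) *)
Definition is_inf01 {I : Type} (f : I -> R) (r : R) : Prop :=
  (r <= 1 /\ forall i, r <= f i) /\
  (forall b, b <= 1 -> (forall i, b <= f i) -> b <= r).
Definition inf01 {I : Type} (f : I -> R) : R := epsilon (inhabits 0) (is_inf01 f).

Definition is_sup01 {I : Type} (f : I -> R) (r : R) : Prop :=
  (0 <= r /\ forall i, f i <= r) /\
  (forall b, 0 <= b -> (forall i, f i <= b) -> r <= b).
Definition sup01 {I : Type} (f : I -> R) : R := epsilon (inhabits 0) (is_sup01 f).

Definition is_met1 {X : Type} (d : X -> X -> R) : Prop :=
  (forall x y, 0 <= d x y <= 1) /\
  (forall x y, d x y = 0 <-> x = y) /\
  (forall x y, d x y = d y x) /\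
  (forall x y z, d x z <= d x y + d y z).

Definition complete {X : Type} (d : X -> X -> R) : Prop :=
  forall u : nat -> X,
    (forall eps, 0 < eps -> exists N, forall n m, (N <= n)%nat -> (N <= m)%nat ->
        d (u n) (u m) < eps) ->
    exists l, forall eps, 0 < eps -> exists N, forall n, (N <= n)%nat -> d (u n) l < eps.

Definition is_cmet1 {X : Type} (d : X -> X -> R) : Prop := is_met1 d /\ complete d.

Definition unif_cont {X Y : Type} (dX : X -> X -> R) (dY : Y -> Y -> R) (f : X -> Y) : Prop :=
  forall eps, 0 < eps -> exists delta, 0 < delta /\
    forall x x', dX x x' < delta -> dY (f x) (f x') < eps.

Definition dprod {X Y : Type} (dX : X -> X -> R) (dY : Y -> Y -> R)
  (p q : X * Y) : R := Rmax (dX (fst p) (fst q)) (dY (snd p) (snd q)).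
Definition dunit (_ _ : unit) : R := 0.

Definition CMT {X : Type} (d : X -> X -> R) (phi : X -> R) : Prop :=
  val01 phi /\
  forall eps, 0 < eps -> exists delta, 0 < delta /\
    forall x x', d x x' < delta -> Rabs (phi x - phi x') < eps.

Definition is_per {X : Type} (Rl : X -> X -> R) : Prop :=
  val01 (fun p : X * X => Rl (fst p) (snd p)) /\
  sq (fun p : X * X => Rl (fst p) (snd p)) (fun p => Rl (snd p) (fst p)) /\
  sq (fun t : X * X * X => let '(x, y, z) := t in Rmax (Rl x y) (Rl y z))
     (fun t : X * X * X => let '(x, _, z) := t in Rl x z).

Definition is_permor {X Y : Type} (RX : X -> X -> R) (RY : Y -> Y -> R)
  (F : X -> Y -> R) : Prop :=
  val01 (fun p : X * Y => F (fst p) (snd p)) /\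
  sq (fun p : X * Y => F (fst p) (snd p))
     (fun p : X * Y => Rmax (RX (fst p) (fst p)) (RY (snd p) (snd p))) /\
  sq (fun t : X * Y * X * Y => let '(x, y, x', y') := t in
        Rmax (Rmax (F x y) (RX x x')) (RY y y'))
     (fun t : X * Y * X * Y => let '(_, _, x', y') := t in F x' y') /\
  sq (fun t : X * Y * Y => let '(x, y, y') := t in Rmax (F x y) (F x y'))
     (fun t : X * Y * Y => let '(_, y, y') := t in RY y y') /\
  sq (fun x : X => RX x x) (fun x : X => inf01 (fun y : Y => F x y)).

Definition pereq {X Y : Type} (F F' : X -> Y -> R) : Prop :=
  sq (fun p : X * Y => F (fst p) (snd p)) (fun p : X * Y => F' (fst p) (snd p)).

Definition pcomp {X Y Z : Type} (F : X -> Y -> R) (H : Y -> Z -> R) : X -> Z -> R :=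
  fun x z => inf01 (fun y : Y => Rmax (F x y) (H y z)).

Definition per_mono {B A : Type} (RB : B -> B -> R) (RA : A -> A -> R)
  (m : B -> A -> R) : Prop :=
  is_permor RB RA m /\
  forall (C : Type) (RC : C -> C -> R) (f g : C -> B -> R),
    is_per RC -> is_permor RC RB f -> is_permor RC RB g ->
    pereq (pcomp f m) (pcomp g m) -> pereq f g.

Definition is_per_terminal {T : Type} (RT : T -> T -> R) : Prop :=
  is_per RT /\
  forall (C : Type) (RC : C -> C -> R), is_per RC ->
    (exists h : C -> T -> R, is_permor RC RT h) /\
    (forall h h' : C -> T -> R, is_permor RC RT h -> is_permor RC RT h' -> pereq h h').

Definition is_per_product {P A B : Type} (RP : P -> P -> R) (RA : A -> A -> R)
  (RB : B -> B -> R) (p1 : P -> A -> R) (p2 : P -> B -> R) : Prop :=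
  is_per RP /\ is_permor RP RA p1 /\ is_permor RP RB p2 /\
  forall (C : Type) (RC : C -> C -> R) (f : C -> A -> R) (g : C -> B -> R),
    is_per RC -> is_permor RC RA f -> is_permor RC RB g ->
    (exists h : C -> P -> R, is_permor RC RP h /\
        pereq (pcomp h p1) f /\ pereq (pcomp h p2) g) /\
    (forall h h' : C -> P -> R, is_permor RC RP h -> is_permor RC RP h' ->
        pereq (pcomp h p1) (pcomp h' p1) -> pereq (pcomp h p2) (pcomp h' p2) ->
        pereq h h').

(* Sub_{PER(U)}: (representatives of) subobjects of an object (A,RA)   *)
Record subrep (A : Type) : Type := Subrep {
  sdom : Type;
  srel : sdom -> sdom -> R;
  smor : sdom -> A -> R }.
Arguments Subrep {A}.
Arguments sdom {A}.
Arguments srel {A}.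
Arguments smor {A}.

Definition is_subobj {A : Type} (RA : A -> A -> R) (S : subrep A) : Prop :=
  is_per (srel S) /\ per_mono (srel S) RA (smor S).

Definition sub_le {A : Type} (S T : subrep A) : Prop :=
  exists k : sdom S -> sdom T -> R,
    is_permor (srel S) (srel T) k /\ pereq (pcomp k (smor T)) (smor S).

(* (P, smor P, q) is a pullback of the mono smor S along g : (D,RD) -> (A,RA);
   smor P represents the reindexed subobject g^*(S) *)
Definition is_pullback {A D : Type} (RD : D -> D -> R) (g : D -> A -> R)
  (S : subrep A) (P : subrep D) (q : sdom P -> sdom S -> R) : Prop :=
  is_per (srel P) /\ is_permor (srel P) RD (smor P) /\ is_permor (srel P) (srel S) q /\
  pereq (pcomp (smor P) g) (pcomp q (smor S)) /\
  forall (C : Type) (RC : C -> C -> R) (u : C -> D -> R) (v : C -> sdom S -> R),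
    is_per RC -> is_permor RC RD u -> is_permor RC (srel S) v ->
    pereq (pcomp u g) (pcomp v (smor S)) ->
    (exists h : C -> sdom P -> R, is_permor RC (srel P) h /\
        pereq (pcomp h (smor P)) u /\ pereq (pcomp h q) v) /\
    (forall h h' : C -> sdom P -> R, is_permor RC (srel P) h -> is_permor RC (srel P) h' ->
        pereq (pcomp h (smor P)) (pcomp h' (smor P)) -> pereq (pcomp h q) (pcomp h' q) ->
        pereq h h').

(* G(X,d) = (X,d);  G(f) = [(x,y) |-> d(f x, y)] *)
Definition Gmor {X Y : Type} (dY : Y -> Y -> R) (f : X -> Y) : X -> Y -> R :=
  fun x y => dY (f x) y.

Definition simr {X : Type} (d : X -> X -> R) (phi : X -> R) : X -> X -> R :=
  fun x x' => Rmax (phi x) (d x x').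

Definition eta {X : Type} (d : X -> X -> R) (phi : X -> R) : subrep X :=
  Subrep X (simr d phi) (simr d phi).

Definition diag_sub {X : Type} (d : X -> X -> R) : subrep (X * X) :=
  Subrep X d (Gmor (dprod d d) (fun x => (x, x))).

(* Main.v *)
Require Import Defs.
From Stdlib Require Import Reals.
From Stdlib Require Import Lra Lia Classical ClassicalEpsilon FunctionalExtensionality.
Open Scope R_scope.


Definition nul (u : nat -> R) : Prop :=
  forall eps, 0 < eps -> exists N, forall n, (N <= n)%nat -> u n <= eps.

Lemma nul_le (u v : nat -> R) : (forall n, u n <= v n) -> nul v -> nul u.
Proof. intros H Hv e He; destruct (Hv e He) as [N HN]; exists N; intros n Hn;
  specialize (HN n Hn); specialize (H n); lra. Qed.

Lemma nul_ev (u v : nat -> R) : (exists M, forall n, (M <= n)%nat -> u n <= v n) -> nul v -> nul u.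
Proof. intros [M H] Hv e He; destruct (Hv e He) as [N HN]; exists (max M N); intros n Hn;
  assert (H1 := HN n ltac:(lia)); assert (H2 := H n ltac:(lia)); lra. Qed.

Lemma nul_max (u v : nat -> R) : nul u -> nul v -> nul (fun n => Rmax (u n) (v n)).
Proof. intros Hu Hv e He; destruct (Hu e He) as [N1 H1]; destruct (Hv e He) as [N2 H2];
  exists (max N1 N2); intros n Hn; apply Rmax_lub; [apply H1|apply H2]; lia. Qed.

Lemma nul_maxl (u v : nat -> R) : nul (fun n => Rmax (u n) (v n)) -> nul u.
Proof. apply nul_le; intros; apply Rmax_l. Qed.
Lemma nul_maxr (u v : nat -> R) : nul (fun n => Rmax (u n) (v n)) -> nul v.
Proof. apply nul_le; intros; apply Rmax_r. Qed.

Lemma nul_plus (u v : nat -> R) : nul u -> nul v -> nul (fun n => u n + v n).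
Proof. intros Hu Hv e He; destruct (Hu (e/2) ltac:(lra)) as [N1 H1];
  destruct (Hv (e/2) ltac:(lra)) as [N2 H2];
  exists (max N1 N2); intros n Hn; assert (A1 := H1 n ltac:(lia)); assert (A2 := H2 n ltac:(lia)); lra. Qed.

Lemma nul_const0 : nul (fun _ => 0).
Proof. intros e He; exists 0%nat; intros; lra. Qed.

Lemma nul_nonpos (u : nat -> R) : (forall n, u n <= 0) -> nul u.
Proof. intros H; apply (nul_le u (fun _ => 0)); auto; apply nul_const0. Qed.

Lemma nul_one_false : ~ nul (fun _ => 1).
Proof. intros H; destruct (H (1/2) ltac:(lra)) as [N HN]; specialize (HN N (le_n _)); lra. Qed.

Lemma inv_nul : nul (fun n => / (INR n + 1)).
Proof.
  intros e He. destruct (archimed_cor1 e He) as [N [HN HN0]]. exists N. intros n Hn.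
  assert (INR N <= INR n) by (apply le_INR; lia).
  assert (0 < INR N) by (apply lt_0_INR; lia).
  assert (/ (INR n + 1) <= / INR N) by (apply Rinv_le_contravar; lra). lra.
Qed.

Lemma sqE {Z : Type} (a b : Z -> R) :
  sq a b <-> forall z : nat -> Z, nul (fun n => a (z n)) -> nul (fun n => b (z n)).
Proof.
  split.
  - intros H z Hz e He. destruct (H e He) as [d [Hd Hab]].
    destruct (Hz d Hd) as [N HN]. exists N; intros n Hn; apply Hab, HN, Hn.
  - intros H e He. apply NNPP; intro Hn.
    assert (Hx : forall n : nat, exists z, a z <= / (INR n + 1) /\ e < b z).
    { intro n. apply NNPP; intro Hc. apply Hn. exists (/ (INR n + 1)). split.
      - apply Rinv_0_lt_compat. assert (0 <= INR n) by apply pos_INR. lra.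
      - intros z Hz. apply Rnot_lt_le. intro Hb. apply Hc. exists z; auto. }
    assert (Hz : exists z : nat -> Z, forall n, a (z n) <= / (INR n + 1) /\ e < b (z n)).
    { exists (fun n => proj1_sig (constructive_indefinite_description _ (Hx n))).
      intro n. exact (proj2_sig (constructive_indefinite_description _ (Hx n))). }
    destruct Hz as [z Hz].
    assert (Hb : nul (fun n => b (z n))).
    { apply H. apply (nul_le _ (fun n => / (INR n + 1))). intro n; apply Hz. apply inv_nul. }
    destruct (Hb e He) as [N HN]. specialize (HN N (le_n _)). specialize (Hz N). lra.
Qed.

Lemma sqE2 {A B : Type} (a b : A * B -> R) :
  (forall (x : nat -> A) (y : nat -> B), nul (fun n => a (x n, y n)) -> nul (fun n => b (x n, y n)))
  -> sq a b.
Proof. intro H. apply sqE. intros z Hz.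
  specialize (H (fun n => fst (z n)) (fun n => snd (z n))).
  assert (E : z = fun n => (fst (z n), snd (z n))) by (apply functional_extensionality; intro n; destruct (z n); reflexivity).
  rewrite E in Hz |- *. apply H; exact Hz. Qed.

Lemma sqE3 {A B C : Type} (a b : A * B * C -> R) :
  (forall (x : nat -> A) (y : nat -> B) (w : nat -> C),
     nul (fun n => a (x n, y n, w n)) -> nul (fun n => b (x n, y n, w n)))
  -> sq a b.
Proof. intro H. apply sqE. intros z Hz.
  specialize (H (fun n => fst (fst (z n))) (fun n => snd (fst (z n))) (fun n => snd (z n))).
  assert (E : z = fun n => (fst (fst (z n)), snd (fst (z n)), snd (z n)))
    by (apply functional_extensionality; intro n; destruct (z n) as [[? ?] ?]; reflexivity).
  rewrite E in Hz |- *. apply H; exact Hz. Qed.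

Lemma sqE4 {A B C D : Type} (a b : A * B * C * D -> R) :
  (forall (x : nat -> A) (y : nat -> B) (w : nat -> C) (v : nat -> D),
     nul (fun n => a (x n, y n, w n, v n)) -> nul (fun n => b (x n, y n, w n, v n)))
  -> sq a b.
Proof. intro H. apply sqE. intros z Hz.
  specialize (H (fun n => fst (fst (fst (z n)))) (fun n => snd (fst (fst (z n))))
     (fun n => snd (fst (z n))) (fun n => snd (z n))).
  assert (E : z = fun n => (fst (fst (fst (z n))), snd (fst (fst (z n))), snd (fst (z n)), snd (z n)))
    by (apply functional_extensionality; intro n; destruct (z n) as [[[? ?] ?] ?]; reflexivity).
  rewrite E in Hz |- *. apply H; exact Hz. Qed.

Lemma sq_use {Z : Type} (a b : Z -> R) (z : nat -> Z) :
  sq a b -> nul (fun n => a (z n)) -> nul (fun n => b (z n)).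
Proof. intros H; apply sqE; auto. Qed.

Lemma inf01_spec {I : Type} (f : I -> R) : (forall i, 0 <= f i) -> is_inf01 f (inf01 f).
Proof.
  intro H0. unfold inf01. apply epsilon_spec.
  destruct (classic (exists i : I, f i < 1)) as [[i0 Hi0]|Hno].
  - set (E := fun r => exists i, r = f i).
    assert (bnd : bound (fun r => E (- r))).
    { exists 0. intros r [i Hi]. assert (H := H0 i). lra. }
    assert (ne : exists r, E (- r)) by (exists (- f i0); exists i0; lra).
    destruct (completeness _ bnd ne) as [m [Hm1 Hm2]].
    exists (- m). split; [split|].
    + assert (- f i0 <= m) by (apply Hm1; exists i0; lra). lra.
    + intro i. assert (- f i <= m) by (apply Hm1; exists i; lra). lra.
    + intros b Hb Hbi. assert (m <= - b). { apply Hm2. intros r [i Hi]. specialize (Hbi i). lra. } lra.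
  - exists 1. split; [split|].
    + lra.
    + intro i. apply Rnot_lt_le. intro Hl. apply Hno; eauto.
    + intros b Hb _; exact Hb.
Qed.

Lemma inf01_le {I : Type} (f : I -> R) i : (forall i, 0 <= f i) -> inf01 f <= f i.
Proof. intro H; apply (inf01_spec f H). Qed.
Lemma inf01_le1 {I : Type} (f : I -> R) : (forall i, 0 <= f i) -> inf01 f <= 1.
Proof. intro H; apply (inf01_spec f H). Qed.
Lemma inf01_ge0 {I : Type} (f : I -> R) : (forall i, 0 <= f i) -> 0 <= inf01 f.
Proof. intro H; apply (inf01_spec f H); [lra|auto]. Qed.
Lemma inf01_glb {I : Type} (f : I -> R) b : (forall i, 0 <= f i) -> b <= 1 -> (forall i, b <= f i) -> b <= inf01 f.
Proof. intro H; apply (inf01_spec f H). Qed.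
Lemma inf01_lt {I : Type} (f : I -> R) c : (forall i, 0 <= f i) -> inf01 f < c -> c <= 1 -> exists i, f i < c.
Proof. intros H Hc Hc1. apply NNPP; intro Hn. assert (c <= inf01 f).
  { apply inf01_glb; auto. intro i. apply Rnot_lt_le; intro; apply Hn; eauto. } lra. Qed.

Lemma nul_inf {I : Type} (F : nat -> I -> R) :
  (forall n i, 0 <= F n i) -> nul (fun n => inf01 (F n)) -> exists y : nat -> I, nul (fun n => F n (y n)).
Proof.
  intros H0 Hn.
  destruct (Hn (1/2) ltac:(lra)) as [N HN].
  destruct (inf01_lt (F N) 1 (H0 N) ltac:(specialize (HN N (le_n _)); lra) ltac:(lra)) as [i0 _].
  assert (Hx : forall n, exists i, inf01 (F n) < 1 -> F n i < Rmin 1 (inf01 (F n) + / (INR n + 1))).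
  { intro n. destruct (classic (inf01 (F n) < 1)) as [h|h].
    - assert (0 < / (INR n + 1)) by (apply Rinv_0_lt_compat; assert (0 <= INR n) by apply pos_INR; lra).
      destruct (inf01_lt (F n) (Rmin 1 (inf01 (F n) + / (INR n + 1))) (H0 n)) as [i Hi].
      + apply Rmin_glb_lt; lra.
      + apply Rmin_l.
      + exists i; auto.
    - exists i0; intro; contradiction. }
  exists (fun n => proj1_sig (constructive_indefinite_description _ (Hx n))).
  apply (nul_ev _ (fun n => inf01 (F n) + / (INR n + 1))).
  - exists N. intros n Hn'. destruct (constructive_indefinite_description _ (Hx n)) as [i Hi]. simpl.
    assert (inf01 (F n) < 1) by (specialize (HN n Hn'); lra).
    specialize (Hi H). assert (Rmin 1 (inf01 (F n) + / (INR n + 1)) <= inf01 (F n) + / (INR n + 1)) by apply Rmin_r. lra.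
  - apply nul_plus; auto. apply inv_nul.
Qed.

Lemma nul_inf_intro {I : Type} (F : nat -> I -> R) (y : nat -> I) :
  (forall n i, 0 <= F n i) -> nul (fun n => F n (y n)) -> nul (fun n => inf01 (F n)).
Proof. intros H0; apply nul_le; intro n; apply inf01_le; auto. Qed.

Lemma sup01_spec {I : Type} (f : I -> R) : (forall i, f i <= 1) -> is_sup01 f (sup01 f).
Proof.
  intro H1. unfold sup01. apply epsilon_spec.
  destruct (classic (exists i : I, 0 < f i)) as [[i0 Hi0]|Hno].
  - set (E := fun r => exists i, r = f i).
    assert (bnd : bound E). { exists 1. intros r [i Hi]. subst; auto. }
    assert (ne : exists r, E r) by (exists (f i0); exists i0; lra).
    destruct (completeness _ bnd ne) as [m [Hm1 Hm2]].
    exists m. split; [split|].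
    + assert (f i0 <= m) by (apply Hm1; exists i0; lra). lra.
    + intro i. apply Hm1; exists i; lra.
    + intros b Hb Hbi. apply Hm2. intros r [i Hi]. subst; auto.
  - exists 0. split; [split|].
    + lra.
    + intro i. apply Rnot_lt_le. intro Hl. apply Hno; eauto.
    + intros b Hb _; exact Hb.
Qed.
Lemma sup01_ge {I : Type} (f : I -> R) i : (forall i, f i <= 1) -> f i <= sup01 f.
Proof. intro H; apply (sup01_spec f H). Qed.
Lemma sup01_ge0 {I : Type} (f : I -> R) : (forall i, f i <= 1) -> 0 <= sup01 f.
Proof. intro H; apply (sup01_spec f H). Qed.
Lemma sup01_lub {I : Type} (f : I -> R) b : (forall i, f i <= 1) -> 0 <= b -> (forall i, f i <= b) -> sup01 f <= b.
Proof. intro H; apply (sup01_spec f H). Qed.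
Lemma sup01_le1 {I : Type} (f : I -> R) : (forall i, f i <= 1) -> sup01 f <= 1.
Proof. intro H; apply sup01_lub; auto; lra. Qed.
Lemma sup01_gt {I : Type} (f : I -> R) c : (forall i, f i <= 1) -> c < sup01 f -> 0 <= c -> exists i, c < f i.
Proof. intros H Hc Hc0. apply NNPP; intro Hn. assert (sup01 f <= c).
  { apply sup01_lub; auto. intro i. apply Rnot_lt_le; intro; apply Hn; eauto. } lra. Qed.


Section Met.
Context {X : Type} (d : X -> X -> R) (Hd : is_met1 d).
Lemma met_val x y : 0 <= d x y <= 1. Proof. apply Hd. Qed.
Lemma met_refl x : d x x = 0. Proof. apply Hd; reflexivity. Qed.
Lemma met_sym x y : d x y = d y x. Proof. apply Hd. Qed.
Lemma met_tri x y z : d x z <= d x y + d y z. Proof. apply Hd. Qed.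
Lemma met_eq x y : d x y = 0 -> x = y. Proof. apply Hd. Qed.
Lemma nd_sym (x y : nat -> X) : nul (fun n => d (x n) (y n)) -> nul (fun n => d (y n) (x n)).
Proof. apply nul_le; intro n; rewrite met_sym; lra. Qed.
Lemma nd_tri (x y z : nat -> X) : nul (fun n => d (x n) (y n)) -> nul (fun n => d (y n) (z n)) ->
  nul (fun n => d (x n) (z n)).
Proof. intros H1 H2; apply (nul_le _ _ (fun n => met_tri (x n) (y n) (z n))). apply nul_plus; auto. Qed.
Lemma nd_refl (x : nat -> X) : nul (fun n => d (x n) (x n)).
Proof. apply nul_nonpos; intro n; rewrite met_refl; lra. Qed.
End Met.

Section Per.
Context {X : Type} (Rl : X -> X -> R) (HR : is_per Rl).
Lemma per_val x y : 0 <= Rl x y <= 1. Proof. destruct HR as [H _]. apply (H (x, y)). Qed.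
Lemma np_sym (x y : nat -> X) : nul (fun n => Rl (x n) (y n)) -> nul (fun n => Rl (y n) (x n)).
Proof. intro H. destruct HR as [_ [Hs _]]. exact (sq_use _ _ (fun n => (x n, y n)) Hs H). Qed.
Lemma np_trans (x y z : nat -> X) : nul (fun n => Rl (x n) (y n)) -> nul (fun n => Rl (y n) (z n)) ->
  nul (fun n => Rl (x n) (z n)).
Proof. intros H1 H2. destruct HR as [_ [_ Ht]].
  exact (sq_use _ _ (fun n => (x n, y n, z n)) Ht (nul_max _ _ H1 H2)). Qed.
Lemma np_refl_l (x y : nat -> X) : nul (fun n => Rl (x n) (y n)) -> nul (fun n => Rl (x n) (x n)).
Proof. intro H. apply (np_trans x y x); auto. apply np_sym; auto. Qed.
Lemma np_refl_r (x y : nat -> X) : nul (fun n => Rl (x n) (y n)) -> nul (fun n => Rl (y n) (y n)).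
Proof. intro H. apply (np_trans y x y); auto; apply np_sym; auto. Qed.
End Per.

Section Mor.
Context {X Y : Type} (RX : X -> X -> R) (RY : Y -> Y -> R) (F : X -> Y -> R) (HF : is_permor RX RY F).
Lemma pm_val x y : 0 <= F x y <= 1. Proof. destruct HF as [H _]. apply (H (x, y)). Qed.
Lemma pm_dom (x : nat -> X) (y : nat -> Y) : nul (fun n => F (x n) (y n)) -> nul (fun n => RX (x n) (x n)).
Proof. intro H. destruct HF as [_ [H2 _]]. exact (nul_maxl _ _ (sq_use _ _ (fun n => (x n, y n)) H2 H)). Qed.
Lemma pm_cod (x : nat -> X) (y : nat -> Y) : nul (fun n => F (x n) (y n)) -> nul (fun n => RY (y n) (y n)).
Proof. intro H. destruct HF as [_ [H2 _]]. exact (nul_maxr _ _ (sq_use _ _ (fun n => (x n, y n)) H2 H)). Qed.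
Lemma pm_ext (x x' : nat -> X) (y y' : nat -> Y) : nul (fun n => F (x n) (y n)) ->
  nul (fun n => RX (x n) (x' n)) -> nul (fun n => RY (y n) (y' n)) -> nul (fun n => F (x' n) (y' n)).
Proof. intros H1 H2 H3. destruct HF as [_ [_ [H _]]].
  exact (sq_use _ _ (fun n => (x n, y n, x' n, y' n)) H (nul_max _ _ (nul_max _ _ H1 H2) H3)). Qed.
Lemma pm_fun (x : nat -> X) (y y' : nat -> Y) : nul (fun n => F (x n) (y n)) ->
  nul (fun n => F (x n) (y' n)) -> nul (fun n => RY (y n) (y' n)).
Proof. intros H1 H2. destruct HF as [_ [_ [_ [H _]]]].
  exact (sq_use _ _ (fun n => (x n, y n, y' n)) H (nul_max _ _ H1 H2)). Qed.
Lemma pm_tot (x : nat -> X) : nul (fun n => RX (x n) (x n)) -> exists y : nat -> Y, nul (fun n => F (x n) (y n)).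
Proof. intro H. destruct HF as [_ [_ [_ [_ H5]]]].
  apply (nul_inf (fun n => F (x n))). intros; apply pm_val. exact (sq_use _ _ x H5 H). Qed.
End Mor.

Lemma cmt_val {X} (d : X -> X -> R) th x : CMT d th -> 0 <= th x <= 1.
Proof. intros [H _]; apply H. Qed.
Lemma cmt_nul {X} (d : X -> X -> R) th (x x' : nat -> X) : CMT d th ->
  nul (fun n => d (x n) (x' n)) -> nul (fun n => th (x n)) -> nul (fun n => th (x' n)).
Proof. intros [_ Hc] H1 H2 e He. destruct (Hc (e/2) ltac:(lra)) as [del [Hdel Hc']].
  destruct (H1 (del/2) ltac:(lra)) as [N1 HN1]. destruct (H2 (e/2) ltac:(lra)) as [N2 HN2].
  exists (max N1 N2). intros n Hn. assert (A1 := HN1 n ltac:(lia)). assert (A2 := HN2 n ltac:(lia)).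
  assert (A3 := Hc' (x n) (x' n) ltac:(lra)). apply Rabs_def2 in A3. lra. Qed.

Lemma Rmax_nonneg a b : 0 <= a -> 0 <= Rmax a b.
Proof. intro; eapply Rle_trans; [|apply Rmax_l]; auto. Qed.
Lemma Rmax_le1 a b : a <= 1 -> b <= 1 -> Rmax a b <= 1.
Proof. intros; apply Rmax_lub; auto. Qed.

Ltac nmax := repeat first [ apply nul_max | assumption ].

Section Comp.
Context {X Y Z : Type} (RX : X -> X -> R) (RY : Y -> Y -> R) (RZ : Z -> Z -> R)
  (F : X -> Y -> R) (H : Y -> Z -> R) (HY : is_per RY)
  (HF : is_permor RX RY F) (HH : is_permor RY RZ H).


Lemma pcomp_elim (x : nat -> X) (z : nat -> Z) : nul (fun n => pcomp F H (x n) (z n)) ->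
  exists y : nat -> Y, nul (fun n => F (x n) (y n)) /\ nul (fun n => H (y n) (z n)).
Proof. intro Hn. destruct (nul_inf (fun n y => Rmax (F (x n) y) (H y (z n)))) as [y Hy].
  - intros; apply Rmax_nonneg, (pm_val _ _ _ HF).
  - exact Hn.
  - exists y; split; [exact (nul_maxl _ _ Hy)|exact (nul_maxr _ _ Hy)]. Qed.

Lemma pcomp_intro (x : nat -> X) (y : nat -> Y) (z : nat -> Z) :
  nul (fun n => F (x n) (y n)) -> nul (fun n => H (y n) (z n)) -> nul (fun n => pcomp F H (x n) (z n)).
Proof. intros H1 H2. apply (nul_inf_intro (fun n y => Rmax (F (x n) y) (H y (z n))) y).
  - intros; apply Rmax_nonneg, (pm_val _ _ _ HF).
  - nmax. Qed.

Lemma pcomp_val x z : 0 <= pcomp F H x z <= 1.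
Proof. unfold pcomp. split; [apply inf01_ge0|apply inf01_le1]; intros; apply Rmax_nonneg, (pm_val _ _ _ HF). Qed.

Lemma pcomp_mor : is_permor RX RZ (pcomp F H).
Proof.
  split; [intros [x z]; apply pcomp_val|].
  split; [apply sqE2; intros x z Hn; simpl in *|].
  { destruct (pcomp_elim x z Hn) as [y [H1 H2]]. apply nul_max.
    - exact (pm_dom _ _ _ HF _ _ H1). - exact (pm_cod _ _ _ HH _ _ H2). }
  split; [apply sqE4; intros x z x' z' Hn; simpl in *|].
  { assert (A := nul_maxl _ _ (nul_maxl _ _ Hn)). assert (B := nul_maxr _ _ (nul_maxl _ _ Hn)).
    assert (C := nul_maxr _ _ Hn). destruct (pcomp_elim x z A) as [y [H1 H2]].
    apply (pcomp_intro _ y).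
    - apply (pm_ext _ _ _ HF x x' y y); auto. exact (pm_cod _ _ _ HF _ _ H1).
    - apply (pm_ext _ _ _ HH y y z z'); auto. exact (pm_cod _ _ _ HF _ _ H1). }
  split; [apply sqE3; intros x z z' Hn; simpl in *|].
  { destruct (pcomp_elim x z (nul_maxl _ _ Hn)) as [y [H1 H2]].
    destruct (pcomp_elim x z' (nul_maxr _ _ Hn)) as [y' [H1' H2']].
    assert (E := pm_fun _ _ _ HF x y' y H1' H1).
    apply (pm_fun _ _ _ HH y z z'); auto.
    apply (pm_ext _ _ _ HH y' y z' z'); auto.
    exact (pm_cod _ _ _ HH _ _ H2'). }
  apply sqE; intros x Hn.
  destruct (pm_tot _ _ _ HF x Hn) as [y Hy].
  destruct (pm_tot _ _ _ HH y (pm_cod _ _ _ HF _ _ Hy)) as [z Hz].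
  apply (nul_inf_intro (fun n z => pcomp F H (x n) z) z).
  - intros; apply pcomp_val.
  - apply (pcomp_intro _ y); auto.
Qed.
End Comp.

Lemma morph_eqv {X Y : Type} (RX : X -> X -> R) (RY : Y -> Y -> R) (F F' : X -> Y -> R) :
  is_per RY -> is_permor RX RY F -> is_permor RX RY F' -> pereq F F' -> pereq F' F.
Proof.
  intros HY HF HF' Hle. apply sqE2; intros x y Hn; simpl in *.
  destruct (pm_tot _ _ _ HF x (pm_dom _ _ _ HF' _ _ Hn)) as [y' Hy'].
  assert (A : nul (fun n => F' (x n) (y' n))) by exact (sq_use _ _ (fun n => (x n, y' n)) Hle Hy').
  assert (E := pm_fun _ _ _ HF' x y' y A Hn).
  apply (pm_ext _ _ _ HF x x y' y); auto.
  exact (pm_dom _ _ _ HF _ _ Hy').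
Qed.

Lemma pereq_use {X Y} (F F' : X -> Y -> R) (x : nat -> X) (y : nat -> Y) :
  pereq F F' -> nul (fun n => F (x n) (y n)) -> nul (fun n => F' (x n) (y n)).
Proof. intros H; exact (sq_use _ _ (fun n => (x n, y n)) H). Qed.


Lemma met_per {X} (d : X -> X -> R) : is_met1 d -> is_per d.
Proof. intro Hd. split; [intros [x y]; apply (met_val d Hd)|split].
  - apply sqE2; intros x y H; simpl in *; apply (nd_sym d Hd); auto.
  - apply sqE3; intros x y z H; simpl in *. apply (nd_tri d Hd _ y); [exact (nul_maxl _ _ H)|exact (nul_maxr _ _ H)].
Qed.

Lemma uc_nul {X Y} (dX : X -> X -> R) (dY : Y -> Y -> R) f (x x' : nat -> X) :
  unif_cont dX dY f -> nul (fun n => dX (x n) (x' n)) -> nul (fun n => dY (f (x n)) (f (x' n))).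
Proof. intros Hf H e He. destruct (Hf e He) as [del [Hdel Hc]]. destruct (H (del/2) ltac:(lra)) as [N HN].
  exists N; intros n Hn. left. apply Hc. specialize (HN n Hn). lra. Qed.

Lemma sq_uc {X Y} (dX : X -> X -> R) (dY : Y -> Y -> R) f :
  sq (fun p : X * X => dX (fst p) (snd p)) (fun p => dY (f (fst p)) (f (snd p))) -> unif_cont dX dY f.
Proof. intros H e He. destruct (H (e/2) ltac:(lra)) as [del [Hdel Hc]]. exists del; split; auto.
  intros x x' Hx. specialize (Hc (x, x')). simpl in Hc. assert (dY (f x) (f x') <= e/2) by (apply Hc; lra). lra. Qed.

Lemma Gmor_mor {X Y} (dX : X -> X -> R) (dY : Y -> Y -> R) f :
  is_met1 dX -> is_met1 dY -> unif_cont dX dY f -> is_permor dX dY (Gmor dY f).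
Proof.
  intros HX HY Hf. unfold Gmor.
  split; [intros [x y]; apply (met_val dY HY)|].
  split; [apply sqE2; intros x y H; simpl in *; apply nul_max; apply nd_refl; auto|].
  split; [apply sqE4; intros x y x' y' H; simpl in *|].
  { assert (A := nul_maxl _ _ (nul_maxl _ _ H)). assert (B := nul_maxr _ _ (nul_maxl _ _ H)).
    assert (C := nul_maxr _ _ H). apply (nd_tri dY HY _ (fun n => f (x n))).
    - apply (nd_sym dY HY). apply (uc_nul dX dY f); auto.
    - apply (nd_tri dY HY _ y); auto. }
  split; [apply sqE3; intros x y y' H; simpl in *|].
  { apply (nd_tri dY HY _ (fun n => f (x n))). apply (nd_sym dY HY). exact (nul_maxl _ _ H). exact (nul_maxr _ _ H). }
  apply sqE; intros x H. apply (nul_inf_intro _ (fun n => f (x n))).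
  - intros; apply (met_val dY HY).
  - apply nd_refl; auto.
Qed.

Lemma G_comp {X Y Z} (dX : X -> X -> R) (dY : Y -> Y -> R) (dZ : Z -> Z -> R) (f : X -> Y) (g : Y -> Z) :
  is_met1 dY -> is_met1 dZ ->
  pereq (Gmor dZ (fun x => g (f x))) (pcomp (Gmor dY f) (Gmor dZ g)).
Proof. intros HY HZ. apply sqE2; intros x z H; simpl in *.
  apply (nul_inf_intro _ (fun n => f (x n))).
  - intros; apply Rmax_nonneg, (met_val dY HY).
  - unfold Gmor. apply nul_max; auto. apply nd_refl; auto. Qed.

Lemma G_full {X Y} (dX : X -> X -> R) (dY : Y -> Y -> R) (F : X -> Y -> R) :
  is_cmet1 dX -> is_cmet1 dY -> is_permor dX dY F ->
  exists f : X -> Y, unif_cont dX dY f /\ pereq (Gmor dY f) F.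
Proof.
  intros [HX _] [HY HYc] HF.
  assert (Hex : forall x, exists y, F x y = 0).
  { intro x. destruct (pm_tot _ _ _ HF (fun _ => x)) as [y Hy]. { apply nd_refl; auto. }
    destruct (HYc y) as [l Hl].
    { intros e He. destruct HF as [_ [_ [_ [H4 _]]]]. destruct (H4 (e/2) ltac:(lra)) as [del [Hdel Hc]].
      destruct (Hy del Hdel) as [N HN]. exists N. intros n m Hn Hm.
      specialize (Hc (x, y n, y m)). simpl in Hc.
      assert (dY (y n) (y m) <= e/2); [apply Hc; apply Rmax_lub; auto|lra]. }
    exists l. assert (Hl' : nul (fun n => dY (y n) l)).
    { intros e He. destruct (Hl e He) as [N HN]. exists N; intros n Hn; left; auto. }
    assert (A := pm_ext _ _ _ HF (fun _ => x) (fun _ => x) y (fun _ => l) Hy ltac:(apply nd_refl; auto) Hl').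
    apply Rle_antisym; [|apply (pm_val _ _ _ HF)].
    apply Rnot_lt_le; intro Hlt. destruct (A (F x l / 2) ltac:(lra)) as [N HN].
    specialize (HN N (le_n _)); simpl in HN; lra. }
  set (f := fun x => proj1_sig (constructive_indefinite_description _ (Hex x))).
  assert (Hf : forall x, F x (f x) = 0) by (intro x; exact (proj2_sig (constructive_indefinite_description _ (Hex x)))).
  assert (Hf0 : forall x : nat -> X, nul (fun n => F (x n) (f (x n)))).
  { intro x. apply nul_nonpos; intro n; rewrite Hf; lra. }
  exists f. split.
  - apply sq_uc. apply sqE2; intros x x' H; simpl in *.
    apply (pm_fun _ _ _ HF x'); auto.
    apply (pm_ext _ _ _ HF x x' (fun n => f (x n)) (fun n => f (x n))); auto. apply nd_refl; auto.
  - apply sqE2; intros x y H; simpl in *. unfold Gmor in H.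
    apply (pm_ext _ _ _ HF x x (fun n => f (x n)) y); auto. apply nd_refl; auto.
Qed.

Lemma G_faithful {X Y} (dX : X -> X -> R) (dY : Y -> Y -> R) (f g : X -> Y) :
  is_met1 dY -> pereq (Gmor dY f) (Gmor dY g) -> f = g.
Proof. intros HY H. apply functional_extensionality; intro x.
  assert (dY (g x) (f x) = 0).
  { apply Rle_antisym; [|apply (met_val dY HY)]. apply Rnot_lt_le; intro Hlt.
    destruct (H (dY (g x) (f x) / 2) ltac:(lra)) as [del [Hdel Hc]].
    specialize (Hc (x, f x)). unfold Gmor in Hc; simpl in Hc. rewrite (met_refl dY HY) in Hc.
    assert (dY (g x) (f x) <= dY (g x) (f x) / 2) by (apply Hc; lra). lra. }
  symmetry; apply (met_eq dY HY); auto. Qed.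

Lemma dunit_nul (u v : nat -> unit) : nul (fun n => dunit (u n) (v n)).
Proof. apply nul_nonpos; intro; unfold dunit; lra. Qed.

Lemma terminal : is_per_terminal dunit.
Proof.
  split.
  { split; [intro z; cbv [dunit]; lra|split].
    - apply sqE2; intros; apply dunit_nul. - apply sqE3; intros; apply dunit_nul. }
  intros C RC HC. split.
  - exists (fun c _ => RC c c). split; [intros [c u]; apply (per_val _ HC)|].
    split; [apply sqE2; intros c u H; simpl in *; apply nul_max; auto; apply dunit_nul|].
    split; [apply sqE4; intros c u c' u' H; simpl in *|].
    { apply (np_refl_r _ HC c). exact (nul_maxr _ _ (nul_maxl _ _ H)). }
    split; [apply sqE3; intros; apply dunit_nul|].
    apply sqE; intros c H. apply (nul_inf_intro _ (fun _ => tt)); auto. intros; apply (per_val _ HC).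
  - intros h h' Hh Hh'. apply sqE2; intros c u H; simpl in *.
    destruct (pm_tot _ _ _ Hh' c (pm_dom _ _ _ Hh _ _ H)) as [u' Hu'].
    apply (pm_ext _ _ _ Hh' c c u' u); auto. exact (pm_dom _ _ _ Hh _ _ H). apply dunit_nul.
Qed.

Section Prod.
Context {X Y : Type} (dX : X -> X -> R) (dY : Y -> Y -> R) (HX : is_met1 dX) (HY : is_met1 dY).

Lemma dprod_met : is_met1 (dprod dX dY).
Proof. unfold dprod. split; [|split; [|split]].
  - intros [x y] [x' y']; simpl. split; [apply Rmax_nonneg, (met_val dX HX)|apply Rmax_le1; [apply (met_val dX HX)|apply (met_val dY HY)]].
  - intros [x y] [x' y']; simpl. split.
    + intro H. assert (A := met_val dX HX x x'). assert (B := met_val dY HY y y').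
      assert (dX x x' <= 0) by (rewrite <- H; apply Rmax_l). assert (dY y y' <= 0) by (rewrite <- H; apply Rmax_r).
      rewrite (met_eq dX HX x x') by lra. rewrite (met_eq dY HY y y') by lra. reflexivity.
    + intro E; inversion E; subst. rewrite (met_refl dX HX), (met_refl dY HY). apply Rmax_left; lra.
  - intros [x y] [x' y']; simpl. rewrite (met_sym dX HX), (met_sym dY HY); auto.
  - intros [x y] [x' y'] [x'' y'']; simpl.
    assert (A1 := met_tri dX HX x x' x''). assert (A2 := met_tri dY HY y y' y'').
    assert (B1 := Rmax_l (dX x x') (dY y y')). assert (B2 := Rmax_r (dX x x') (dY y y')).
    assert (B3 := Rmax_l (dX x' x'') (dY y' y'')). assert (B4 := Rmax_r (dX x' x'') (dY y' y'')).
    apply Rmax_lub; lra.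
Qed.

Lemma nprod_l (p q : nat -> X * Y) : nul (fun n => dprod dX dY (p n) (q n)) -> nul (fun n => dX (fst (p n)) (fst (q n))).
Proof. apply nul_le; intro; apply Rmax_l. Qed.
Lemma nprod_r (p q : nat -> X * Y) : nul (fun n => dprod dX dY (p n) (q n)) -> nul (fun n => dY (snd (p n)) (snd (q n))).
Proof. apply nul_le; intro; apply Rmax_r. Qed.
Lemma nprod_i (p q : nat -> X * Y) : nul (fun n => dX (fst (p n)) (fst (q n))) -> nul (fun n => dY (snd (p n)) (snd (q n))) -> nul (fun n => dprod dX dY (p n) (q n)).
Proof. intros; unfold dprod; nmax. Qed.

Lemma uc_fst : unif_cont (dprod dX dY) dX (@fst X Y).
Proof. apply sq_uc; apply sqE2; intros p q H; apply nprod_l; auto. Qed.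
Lemma uc_snd : unif_cont (dprod dX dY) dY (@snd X Y).
Proof. apply sq_uc; apply sqE2; intros p q H; apply nprod_r; auto. Qed.

Lemma p1_mor : is_permor (dprod dX dY) dX (Gmor dX (@fst X Y)).
Proof. apply Gmor_mor; auto. apply dprod_met. apply uc_fst. Qed.
Lemma p2_mor : is_permor (dprod dX dY) dY (Gmor dY (@snd X Y)).
Proof. apply Gmor_mor; auto. apply dprod_met. apply uc_snd. Qed.

Lemma product : is_per_product (dprod dX dY) dX dY (Gmor dX (@fst X Y)) (Gmor dY (@snd X Y)).
Proof.
  assert (HP := dprod_met). assert (HPp := met_per _ HP).
  split; auto. split; [apply p1_mor|split; [apply p2_mor|]].
  intros C RC f g HC Hf Hg. split.
  - exists (fun c p => Rmax (f c (fst p)) (g c (snd p))).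
    split; [|split].
    + split; [intros [c [x y]]; simpl; split; [apply Rmax_nonneg, (pm_val _ _ _ Hf)|apply Rmax_le1; [apply (pm_val _ _ _ Hf)|apply (pm_val _ _ _ Hg)]]|].
      split; [apply sqE2; intros c p H; simpl in *|].
      { apply nul_max. exact (pm_dom _ _ _ Hf _ _ (nul_maxl _ _ H)). apply nd_refl; auto. }
      split; [apply sqE4; intros c p c' p' H; simpl in *|].
      { assert (A := nul_maxl _ _ (nul_maxl _ _ H)). assert (B := nul_maxr _ _ (nul_maxl _ _ H)).
        assert (D := nul_maxr _ _ H). apply nul_max.
        - apply (pm_ext _ _ _ Hf c c' (fun n => fst (p n))); auto. exact (nul_maxl _ _ A). apply nprod_l; auto.
        - apply (pm_ext _ _ _ Hg c c' (fun n => snd (p n))); auto. exact (nul_maxr _ _ A). apply nprod_r; auto. }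
      split; [apply sqE3; intros c p p' H; simpl in *|].
      { assert (A := nul_maxl _ _ H). assert (B := nul_maxr _ _ H). apply nprod_i.
        - apply (pm_fun _ _ _ Hf c). exact (nul_maxl _ _ A). exact (nul_maxl _ _ B).
        - apply (pm_fun _ _ _ Hg c). exact (nul_maxr _ _ A). exact (nul_maxr _ _ B). }
      apply sqE; intros c H. destruct (pm_tot _ _ _ Hf c H) as [x Hx]. destruct (pm_tot _ _ _ Hg c H) as [y Hy].
      apply (nul_inf_intro _ (fun n => (x n, y n))).
      * intros; apply Rmax_nonneg, (pm_val _ _ _ Hf).
      * simpl; nmax.
    + apply sqE2; intros c x H; simpl in *. unfold pcomp in H.
      destruct (nul_inf _ ltac:(intros; apply Rmax_nonneg, Rmax_nonneg, (pm_val _ _ _ Hf)) H) as [p Hp].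
      assert (A := nul_maxl _ _ (nul_maxl _ _ Hp)). assert (B := nul_maxr _ _ Hp). unfold Gmor in B.
      apply (pm_ext _ _ _ Hf c c (fun n => fst (p n))); auto. exact (pm_dom _ _ _ Hf _ _ A).
    + apply sqE2; intros c y H; simpl in *. unfold pcomp in H.
      destruct (nul_inf _ ltac:(intros; apply Rmax_nonneg, Rmax_nonneg, (pm_val _ _ _ Hf)) H) as [p Hp].
      assert (A := nul_maxr _ _ (nul_maxl _ _ Hp)). assert (B := nul_maxr _ _ Hp). unfold Gmor in B.
      apply (pm_ext _ _ _ Hg c c (fun n => snd (p n))); auto. exact (pm_dom _ _ _ Hg _ _ A).
  - intros h h' Hh Hh' E1 E2. apply sqE2; intros c p H; simpl in *.
    assert (Hc := pm_dom _ _ _ Hh _ _ H). assert (Hp := pm_cod _ _ _ Hh _ _ H).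
    assert (A1 : nul (fun n => pcomp h (Gmor dX fst) (c n) (fst (p n)))).
    { apply (pcomp_intro _ _ _ _ Hh c p); auto. unfold Gmor; apply nd_refl; auto. }
    assert (A2 : nul (fun n => pcomp h (Gmor dY snd) (c n) (snd (p n)))).
    { apply (pcomp_intro _ _ _ _ Hh c p); auto. unfold Gmor; apply nd_refl; auto. }
    apply (pereq_use _ _ c (fun n => fst (p n)) E1) in A1.
    apply (pereq_use _ _ c (fun n => snd (p n)) E2) in A2.
    destruct (pcomp_elim _ _ _ _ Hh' c _ A1) as [p1 [B1 C1]].
    destruct (pcomp_elim _ _ _ _ Hh' c _ A2) as [p2 [B2 C2]].
    unfold Gmor in C1, C2.
    assert (D := pm_fun _ _ _ Hh' c p1 p2 B1 B2).
    apply (pm_ext _ _ _ Hh' c c p1 p); auto. apply nprod_i; auto.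
    apply (nd_tri dY HY _ (fun n => snd (p2 n))); auto. apply nprod_r; auto.
Qed.
End Prod.



Lemma sq_trans {Z} (a b c : Z -> R) : sq a b -> sq b c -> sq a c.
Proof. intros H1 H2; apply sqE; intros z Hz; apply (sq_use _ _ z H2), (sq_use _ _ z H1), Hz. Qed.

Definition sig {A : Type} (S : subrep A) (a : A) : R := inf01 (fun s => smor S s a).

Definition minj {B A : Type} (RB : B -> B -> R) (m : B -> A -> R) : Prop :=
  sq (fun t : B * B * A => let '(b, b', a) := t in Rmax (m b a) (m b' a))
     (fun t : B * B * A => let '(b, b', _) := t in RB b b').

Lemma nminj {B A} (RB : B -> B -> R) (m : B -> A -> R) (b b' : nat -> B) (a : nat -> A) :
  minj RB m -> nul (fun n => m (b n) (a n)) -> nul (fun n => m (b' n) (a n)) -> nul (fun n => RB (b n) (b' n)).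
Proof. intros H H1 H2. exact (sq_use _ _ (fun n => (b n, b' n, a n)) H (nul_max _ _ H1 H2)). Qed.

Lemma sig_elim {A B} (RB : B -> B -> R) (RA : A -> A -> R) (S : subrep A) (x : nat -> A) :
  is_permor (srel S) RA (smor S) -> nul (fun n => sig S (x n)) -> exists s, nul (fun n => smor S (s n) (x n)).
Proof. intros Hm H. apply (nul_inf (fun n s => smor S s (x n))); auto. intros; apply (pm_val _ _ _ Hm). Qed.

Lemma sig_intro {A} (RA : A -> A -> R) (S : subrep A) (x : nat -> A) s :
  is_permor (srel S) RA (smor S) -> nul (fun n => smor S (s n) (x n)) -> nul (fun n => sig S (x n)).
Proof. intros Hm H. apply (nul_inf_intro (fun n s => smor S s (x n)) s); auto. intros; apply (pm_val _ _ _ Hm). Qed.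

Lemma abs_bnds a c M : Rabs (a - c) <= M -> a - c <= M /\ c - a <= M.
Proof. intro H. split; [eapply Rle_trans; [apply Rle_abs|exact H]|].
  rewrite Rabs_minus_sym in H. eapply Rle_trans; [apply Rle_abs|exact H]. Qed.
Lemma Rabs_max a b c e : Rabs (Rmax a b - Rmax c e) <= Rmax (Rabs (a - c)) (Rabs (b - e)).
Proof. set (M := Rmax (Rabs (a - c)) (Rabs (b - e))). destruct (abs_bnds a c M (Rmax_l _ _)). destruct (abs_bnds b e M (Rmax_r _ _)).
  assert (Rmax a b <= Rmax c e + M) by (apply Rmax_lub; [assert (H5 := Rmax_l c e)|assert (H5 := Rmax_r c e)]; lra).
  assert (Rmax c e <= Rmax a b + M) by (apply Rmax_lub; [assert (H5 := Rmax_l a b)|assert (H5 := Rmax_r a b)]; lra).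
  apply Rabs_le; lra. Qed.
Lemma Rabs_min a b c e : Rabs (Rmin a b - Rmin c e) <= Rmax (Rabs (a - c)) (Rabs (b - e)).
Proof. set (M := Rmax (Rabs (a - c)) (Rabs (b - e))). destruct (abs_bnds a c M (Rmax_l _ _)). destruct (abs_bnds b e M (Rmax_r _ _)).
  assert (Rmin a b - M <= Rmin c e) by (apply Rmin_glb; [assert (H5 := Rmin_l a b)|assert (H5 := Rmin_r a b)]; lra).
  assert (Rmin c e - M <= Rmin a b) by (apply Rmin_glb; [assert (H5 := Rmin_l c e)|assert (H5 := Rmin_r c e)]; lra).
  apply Rabs_le; lra. Qed.

Lemma cmt_max {X} (d : X -> X -> R) phi psi : CMT d phi -> CMT d psi -> CMT d (fun x => Rmax (phi x) (psi x)).
Proof. intros [H1 C1] [H2 C2]. split.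
  - intro x; specialize (H1 x); specialize (H2 x); split; [apply Rmax_nonneg; lra|apply Rmax_le1; lra].
  - intros e He. destruct (C1 e He) as [d1 [Hd1 E1]]. destruct (C2 e He) as [d2 [Hd2 E2]].
    exists (Rmin d1 d2); split; [apply Rmin_pos; auto|]. intros x x' Hx.
    eapply Rle_lt_trans; [apply Rabs_max|]. apply Rmax_lub_lt; [apply E1|apply E2];
    eapply Rlt_le_trans; eauto; [apply Rmin_l|apply Rmin_r]. Qed.
Lemma cmt_min {X} (d : X -> X -> R) phi psi : CMT d phi -> CMT d psi -> CMT d (fun x => Rmin (phi x) (psi x)).
Proof. intros [H1 C1] [H2 C2]. split.
  - intro x; specialize (H1 x); specialize (H2 x); split; [apply Rmin_glb; lra|]. eapply Rle_trans; [apply Rmin_l|lra].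
  - intros e He. destruct (C1 e He) as [d1 [Hd1 E1]]. destruct (C2 e He) as [d2 [Hd2 E2]].
    exists (Rmin d1 d2); split; [apply Rmin_pos; auto|]. intros x x' Hx.
    eapply Rle_lt_trans; [apply Rabs_min|]. apply Rmax_lub_lt; [apply E1|apply E2];
    eapply Rlt_le_trans; eauto; [apply Rmin_l|apply Rmin_r]. Qed.
Lemma cmt_const {X} (d : X -> X -> R) c : 0 <= c <= 1 -> CMT d (fun _ => c).
Proof. intros Hc; split; [intro; auto|]. intros e He; exists 1; split; [lra|]. intros; rewrite Rminus_diag, Rabs_R0; auto. Qed.

Section Eta.
Context {X : Type} (d : X -> X -> R) (Hd : is_met1 d).

Lemma nsim_l th (x y : nat -> X) : nul (fun n => simr d th (x n) (y n)) -> nul (fun n => th (x n)).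
Proof. apply nul_maxl. Qed.
Lemma nsim_r th (x y : nat -> X) : nul (fun n => simr d th (x n) (y n)) -> nul (fun n => d (x n) (y n)).
Proof. apply nul_maxr. Qed.
Lemma nsim_i th (x y : nat -> X) : nul (fun n => th (x n)) -> nul (fun n => d (x n) (y n)) -> nul (fun n => simr d th (x n) (y n)).
Proof. intros; unfold simr; nmax. Qed.

Context (th : X -> R) (Hth : CMT d th).

Lemma simr_val x y : 0 <= simr d th x y <= 1.
Proof. unfold simr. assert (A := cmt_val d th x Hth). assert (B := met_val d Hd x y).
  split; [apply Rmax_nonneg; lra|apply Rmax_le1; lra]. Qed.

Lemma simr_per : is_per (simr d th).
Proof. split; [intros [x y]; apply simr_val|split].
  - apply sqE2; intros x y H; simpl in *. assert (A := nsim_l _ _ _ H). assert (B := nsim_r _ _ _ H).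
    apply nsim_i; [apply (cmt_nul d th x); auto|apply nd_sym; auto].
  - apply sqE3; intros x y z H; simpl in *. assert (A := nul_maxl _ _ H). assert (B := nul_maxr _ _ H).
    apply nsim_i. exact (nsim_l _ _ _ A). apply (nd_tri d Hd _ y). exact (nsim_r _ _ _ A). exact (nsim_r _ _ _ B).
Qed.

Lemma simr_mor : is_permor (simr d th) d (simr d th).
Proof. split; [intros [x y]; apply simr_val|].
  split; [apply sqE2; intros x y H; simpl in *; apply nul_max; [apply nsim_i; [exact (nsim_l _ _ _ H)|apply nd_refl; auto]|apply nd_refl; auto]|].
  split; [apply sqE4; intros x y x' y' H; simpl in *|].
  { assert (A := nul_maxl _ _ (nul_maxl _ _ H)). assert (B := nul_maxr _ _ (nul_maxl _ _ H)).
    assert (C := nul_maxr _ _ H). assert (B' := nsim_r _ _ _ B).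
    apply nsim_i. apply (cmt_nul d th x); auto. exact (nsim_l _ _ _ A).
    apply (nd_tri d Hd _ x). apply nd_sym; auto. apply (nd_tri d Hd _ y); auto. exact (nsim_r _ _ _ A). }
  split; [apply sqE3; intros x y y' H; simpl in *|].
  { apply (nd_tri d Hd _ x). apply nd_sym; auto. exact (nsim_r _ _ _ (nul_maxl _ _ H)). exact (nsim_r _ _ _ (nul_maxr _ _ H)). }
  apply sqE; intros x H. apply (nul_inf_intro _ x); auto. intros; apply simr_val.
Qed.

Lemma simr_mono : per_mono (simr d th) d (simr d th).
Proof. split; [apply simr_mor|]. intros C RC f g HC Hf Hg E.
  apply sqE2; intros c x H; simpl in *.
  assert (A := pm_cod _ _ _ Hf _ _ H).
  assert (B : nul (fun n => pcomp f (simr d th) (c n) (x n))).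
  { apply (pcomp_intro _ _ _ _ Hf c x); auto. }
  apply (pereq_use _ _ c x E) in B.
  destruct (pcomp_elim _ _ _ _ Hg c x B) as [x' [B1 B2]].
  apply (pm_ext _ _ _ Hg c c x' x); auto. exact (pm_dom _ _ _ Hg _ _ B1).
Qed.

Lemma eta_subobj : is_subobj d (eta d th).
Proof. split; [apply simr_per|apply simr_mono]. Qed.

Lemma simr_inj : minj (simr d th) (simr d th).
Proof. apply sqE3; intros x x' a H; simpl in *. apply nsim_i. exact (nsim_l _ _ _ (nul_maxl _ _ H)).
  apply (nd_tri d Hd _ a). exact (nsim_r _ _ _ (nul_maxl _ _ H)). apply nd_sym; auto. exact (nsim_r _ _ _ (nul_maxr _ _ H)). Qed.

Lemma sig_eta1 : sq th (sig (eta d th)).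
Proof. apply sqE; intros x H. apply (sig_intro d (eta d th) x x simr_mor). apply nsim_i; auto. apply nd_refl; auto. Qed.
Lemma sig_eta2 : sq (sig (eta d th)) th.
Proof. apply sqE; intros x H. destruct (sig_elim d d (eta d th) x simr_mor H) as [x' Hx'].
  apply (cmt_nul d th x'); auto. exact (nsim_r _ _ _ Hx'). exact (nsim_l _ _ _ Hx'). Qed.

End Eta.

Lemma partA1 {X} (d : X -> X -> R) (th : X -> R) (S : subrep X) :
  is_met1 d -> CMT d th -> is_permor (srel S) d (smor S) ->
  sub_le (eta d th) S -> sq th (sig S).
Proof.
  intros Hd Hth Hm [k [Hk Hpe]]. cbn [eta sdom srel smor] in *.
  assert (Hc := pcomp_mor _ _ _ _ _ Hk Hm).
  assert (E := morph_eqv _ _ _ _ (met_per d Hd) Hc (simr_mor d Hd th Hth) Hpe).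
  apply sqE; intros x H.
  assert (A : nul (fun n => simr d th (x n) (x n))) by (apply nsim_i; auto; apply nd_refl; auto).
  apply (pereq_use _ _ x x E) in A.
  destruct (pcomp_elim _ _ _ _ Hk x x A) as [s [_ B]].
  exact (sig_intro d S x s Hm B).
Qed.

Section PartA2.
Context {Z X : Type} (dZ : Z -> Z -> R) (d : X -> X -> R) (HZ : is_met1 dZ) (Hd : is_met1 d)
  (f : Z -> X) (Hf : unif_cont dZ d f) (th : Z -> R) (Hth : CMT dZ th)
  (S : subrep X) (Hm : is_permor (srel S) d (smor S)) (Hinj : minj (srel S) (smor S))
  (Hle : sq th (fun z => sig S (f z))).

Definition kA (z : Z) (s : sdom S) : R := Rmax (th z) (smor S s (f z)).

Lemma kA_mor : is_permor (simr dZ th) (srel S) kA.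
Proof. unfold kA.
  split; [intros [z s]; simpl; split; [apply Rmax_nonneg, (cmt_val dZ th z Hth)|apply Rmax_le1; [apply (cmt_val dZ th z Hth)|apply (pm_val _ _ _ Hm)]]|].
  split; [apply sqE2; intros z s H; simpl in *|].
  { apply nul_max. apply nsim_i; [exact (nul_maxl _ _ H)|apply nd_refl; auto]. exact (pm_dom _ _ _ Hm _ _ (nul_maxr _ _ H)). }
  split; [apply sqE4; intros z s z' s' H; simpl in *|].
  { assert (A := nul_maxl _ _ (nul_maxl _ _ H)). assert (B := nul_maxr _ _ (nul_maxl _ _ H)).
    assert (C := nul_maxr _ _ H). assert (B' := nsim_r _ _ _ _ B). apply nul_max.
    - apply (cmt_nul dZ th z); auto. exact (nul_maxl _ _ A).
    - apply (pm_ext _ _ _ Hm s s' (fun n => f (z n)) (fun n => f (z' n))); auto. exact (nul_maxr _ _ A).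
      apply (uc_nul dZ d f); auto. }
  split; [apply sqE3; intros z s s' H; simpl in *|].
  { apply (nminj _ _ s s' (fun n => f (z n)) Hinj). exact (nul_maxr _ _ (nul_maxl _ _ H)). exact (nul_maxr _ _ (nul_maxr _ _ H)). }
  apply sqE; intros z H. assert (A := sq_use _ _ z Hle (nsim_l _ _ _ _ H)). simpl in A.
  destruct (sig_elim d d S _ Hm A) as [s Hs].
  apply (nul_inf_intro _ s). intros; apply Rmax_nonneg, (cmt_val dZ th _ Hth). apply nul_max; auto. exact (nsim_l _ _ _ _ H).
Qed.

Lemma kA_comp : pereq (pcomp kA (smor S)) (fun z x => Rmax (th z) (d (f z) x)).
Proof. apply sqE2; intros z x H; simpl in *.
  destruct (pcomp_elim _ _ _ _ kA_mor z x H) as [s [H1 H2]]. unfold kA in H1.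
  apply nul_max. exact (nul_maxl _ _ H1). apply (pm_fun _ _ _ Hm s); auto. exact (nul_maxr _ _ H1). Qed.
End PartA2.

Lemma partA2 {X} (d : X -> X -> R) (th : X -> R) (S : subrep X) :
  is_met1 d -> CMT d th -> is_permor (srel S) d (smor S) -> minj (srel S) (smor S) ->
  sq th (sig S) -> sub_le (eta d th) S.
Proof. intros Hd Hth Hm Hinj Hle.
  assert (Hid : unif_cont d d (fun x => x)) by (intros e He; exists e; split; auto).
  exists (kA (fun x => x) th S). cbn [eta sdom srel smor]. split.
  - apply (kA_mor d d Hd (fun x => x) Hid th Hth S Hm Hinj Hle).
  - exact (kA_comp d d Hd (fun x => x) Hid th Hth S Hm Hinj Hle).
Qed.

Lemma partB1 {X} (d : X -> X -> R) (th : X -> R) (S : subrep X) :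
  is_met1 d -> CMT d th -> is_permor (srel S) d (smor S) ->
  sub_le S (eta d th) -> sq (sig S) th.
Proof.
  intros Hd Hth Hm [k [Hk Hpe]]. cbn [eta sdom srel smor] in *.
  assert (Hc := pcomp_mor _ _ _ _ _ Hk (simr_mor d Hd th Hth)).
  assert (E := morph_eqv _ _ _ _ (met_per d Hd) Hc Hm Hpe).
  apply sqE; intros x H. destruct (sig_elim d d S x Hm H) as [s Hs].
  apply (pereq_use _ _ s x E) in Hs.
  destruct (pcomp_elim _ _ _ _ Hk s x Hs) as [x' [_ B]].
  apply (cmt_nul d th x'); auto. exact (nsim_r _ _ _ _ B). exact (nsim_l _ _ _ _ B).
Qed.

Lemma partB2 {X} (d : X -> X -> R) (th : X -> R) (S : subrep X) :
  is_met1 d -> (forall x, 0 <= th x <= 1) -> is_permor (srel S) d (smor S) ->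
  sq (sig S) th -> sub_le S (eta d th).
Proof.
  intros Hd Hv Hm Hle. exists (smor S). cbn [eta sdom srel smor]. split.
  - split; [apply Hm|].
    split; [apply sqE2; intros s x H; simpl in *|].
    { apply nul_max. exact (pm_dom _ _ _ Hm _ _ H). apply nsim_i. exact (sq_use _ _ x Hle (sig_intro d S x s Hm H)). apply nd_refl; auto. }
    split; [apply sqE4; intros s x s' x' H; simpl in *|].
    { apply (pm_ext _ _ _ Hm s s' x x'). exact (nul_maxl _ _ (nul_maxl _ _ H)). exact (nul_maxr _ _ (nul_maxl _ _ H)). exact (nsim_r _ _ _ _ (nul_maxr _ _ H)). }
    split; [apply sqE3; intros s x x' H; simpl in *|].
    { apply nsim_i. exact (sq_use _ _ x Hle (sig_intro d S x s Hm (nul_maxl _ _ H))). exact (pm_fun _ _ _ Hm s x x' (nul_maxl _ _ H) (nul_maxr _ _ H)). }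
    apply Hm.
  - apply sqE2; intros s x H; simpl in *.
    unfold pcomp in H. destruct (nul_inf _ ltac:(intros; apply Rmax_nonneg, (pm_val _ _ _ Hm)) H) as [x' Hx'].
    apply (pm_ext _ _ _ Hm s s x' x). exact (nul_maxl _ _ Hx'). exact (pm_dom _ _ _ Hm _ _ (nul_maxl _ _ Hx')). exact (nsim_r _ _ _ _ (nul_maxr _ _ Hx')).
Qed.



Section MonoInj.
Context {B A : Type} (RB : B -> B -> R) (RA : A -> A -> R) (m : B -> A -> R)
  (HB : is_per RB) (Hm : is_permor RB RA m).

Definition ee (p : B * B) : R := inf01 (fun a => Rmax (m (fst p) a) (m (snd p) a)).
Definition RCc (p p' : B * B) : R :=
  Rmax (Rmax (RB (fst p) (fst p')) (RB (snd p) (snd p'))) (Rmax (ee p) (ee p')).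
Definition fsel (sel : B * B -> B) (p : B * B) (b : B) : R := Rmax (RB (sel p) b) (ee p).

Lemma ee_val p : 0 <= ee p <= 1.
Proof. unfold ee; split; [apply inf01_ge0|apply inf01_le1]; intros; apply Rmax_nonneg, (pm_val _ _ _ Hm). Qed.

Lemma ee_elim (p : nat -> B * B) : nul (fun n => ee (p n)) ->
  exists a, nul (fun n => m (fst (p n)) (a n)) /\ nul (fun n => m (snd (p n)) (a n)).
Proof. intro H. unfold ee in H. destruct (nul_inf _ ltac:(intros; apply Rmax_nonneg, (pm_val _ _ _ Hm)) H) as [a Ha].
  exists a; split; [exact (nul_maxl _ _ Ha)|exact (nul_maxr _ _ Ha)]. Qed.
Lemma ee_intro (p : nat -> B * B) a : nul (fun n => m (fst (p n)) (a n)) -> nul (fun n => m (snd (p n)) (a n)) ->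
  nul (fun n => ee (p n)).
Proof. intros H1 H2. unfold ee. apply (nul_inf_intro _ a). intros; apply Rmax_nonneg, (pm_val _ _ _ Hm). nmax. Qed.

Lemma RCc_val p p' : 0 <= RCc p p' <= 1.
Proof. unfold RCc. assert (HA1 := per_val _ HB (fst p) (fst p')). assert (A2 := per_val _ HB (snd p) (snd p')).
  assert (A3 := ee_val p). assert (A4 := ee_val p').
  split; [apply Rmax_nonneg, Rmax_nonneg; lra|apply Rmax_le1; apply Rmax_le1; lra]. Qed.

Lemma ee_RCc (p : nat -> B * B) : nul (fun n => ee (p n)) -> nul (fun n => RCc (p n) (p n)).
Proof. intro H. destruct (ee_elim p H) as [a [H1 H2]]. unfold RCc. apply nul_max; [apply nul_max|nmax].
  exact (pm_dom _ _ _ Hm _ _ H1). exact (pm_dom _ _ _ Hm _ _ H2). Qed.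

Lemma RCc_per : is_per RCc.
Proof. split; [intros [p p']; apply RCc_val|split].
  - apply sqE2; intros p p' H; simpl in *. unfold RCc in *.
    assert (HA := nul_maxl _ _ H). assert (D := nul_maxr _ _ H).
    apply nul_max; apply nul_max.
    + apply (np_sym _ HB). exact (nul_maxl _ _ HA).
    + apply (np_sym _ HB). exact (nul_maxr _ _ HA).
    + exact (nul_maxr _ _ D). + exact (nul_maxl _ _ D).
  - apply sqE3; intros p q r H; simpl in *. unfold RCc in *.
    assert (HA := nul_maxl _ _ H). assert (D := nul_maxr _ _ H).
    apply nul_max; apply nul_max.
    + apply (np_trans _ HB _ (fun n => fst (q n))). exact (nul_maxl _ _ (nul_maxl _ _ HA)). exact (nul_maxl _ _ (nul_maxl _ _ D)).
    + apply (np_trans _ HB _ (fun n => snd (q n))). exact (nul_maxr _ _ (nul_maxl _ _ HA)). exact (nul_maxr _ _ (nul_maxl _ _ D)).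
    + exact (nul_maxl _ _ (nul_maxr _ _ HA)). + exact (nul_maxr _ _ (nul_maxr _ _ D)).
Qed.

Lemma fsel_mor sel (Hsel : forall p p' : nat -> B * B, nul (fun n => RCc (p n) (p' n)) -> nul (fun n => RB (sel (p n)) (sel (p' n)))) :
  is_permor RCc RB (fsel sel).
Proof. unfold fsel.
  split; [intros [p b]; simpl; assert (HA1 := per_val _ HB (sel p) b); assert (HA2 := ee_val p); split; [apply Rmax_nonneg; lra|apply Rmax_le1; lra]|].
  split; [apply sqE2; intros p b H; simpl in *|].
  { apply nul_max. apply ee_RCc. exact (nul_maxr _ _ H). exact (np_refl_r _ HB _ _ (nul_maxl _ _ H)). }
  split; [apply sqE4; intros p b p' b' H; simpl in *|].
  { assert (HA := nul_maxl _ _ (nul_maxl _ _ H)). assert (Bq := nul_maxr _ _ (nul_maxl _ _ H)).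
    assert (D := nul_maxr _ _ H). apply nul_max.
    - apply (np_trans _ HB _ (fun n => sel (p n))). apply (np_sym _ HB). apply Hsel; auto.
      apply (np_trans _ HB _ b); auto. exact (nul_maxl _ _ HA).
    - unfold RCc in Bq. exact (nul_maxr _ _ (nul_maxr _ _ Bq)). }
  split; [apply sqE3; intros p b b' H; simpl in *|].
  { apply (np_trans _ HB _ (fun n => sel (p n))). apply (np_sym _ HB). exact (nul_maxl _ _ (nul_maxl _ _ H)). exact (nul_maxl _ _ (nul_maxr _ _ H)). }
  apply sqE; intros p H. apply (nul_inf_intro _ (fun n => sel (p n))).
  - intros; apply Rmax_nonneg, (per_val _ HB).
  - apply nul_max. apply Hsel; auto. unfold RCc in H. exact (nul_maxl _ _ (nul_maxr _ _ H)).
Qed.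

Lemma f1_mor : is_permor RCc RB (fsel fst).
Proof. apply fsel_mor. intros p p' H. unfold RCc in H. exact (nul_maxl _ _ (nul_maxl _ _ H)). Qed.
Lemma f2_mor : is_permor RCc RB (fsel snd).
Proof. apply fsel_mor. intros p p' H. unfold RCc in H. exact (nul_maxr _ _ (nul_maxl _ _ H)). Qed.

Lemma f12_eq : pereq (pcomp (fsel fst) m) (pcomp (fsel snd) m).
Proof. apply sqE2; intros p a H; simpl in *.
  destruct (pcomp_elim _ _ _ _ f1_mor p a H) as [b [H1 H2]]. unfold fsel in H1.
  assert (E := nul_maxr _ _ H1).
  assert (M1 : nul (fun n => m (fst (p n)) (a n))).
  { apply (pm_ext _ _ _ Hm b _ a a); auto. apply (np_sym _ HB). exact (nul_maxl _ _ H1). exact (pm_cod _ _ _ Hm _ _ H2). }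
  destruct (ee_elim p E) as [a' [HA1 HA2]].
  assert (F := pm_fun _ _ _ Hm _ _ _ HA1 M1).
  apply (pcomp_intro _ _ _ _ f2_mor p (fun n => snd (p n))).
  - unfold fsel. apply nul_max; auto. exact (pm_dom _ _ _ Hm _ _ HA2).
  - apply (pm_ext _ _ _ Hm (fun n => snd (p n)) _ a' a); auto. exact (pm_dom _ _ _ Hm _ _ HA2).
Qed.
End MonoInj.

Lemma mono_inj {B A : Type} (RB : B -> B -> R) (RA : A -> A -> R) (m : B -> A -> R) :
  is_per RB -> per_mono RB RA m -> minj RB m.
Proof. intros HB [Hm Hmono].
  assert (E := Hmono _ _ _ _ (RCc_per RB RA m HB Hm) (f1_mor RB RA m HB Hm) (f2_mor RB RA m HB Hm) (f12_eq RB RA m HB Hm)).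
  apply sqE3; intros b b' a H; simpl in *.
  assert (Ee : nul (fun n => ee m (b n, b' n))) by (apply (ee_intro RB RA m Hm _ a); [exact (nul_maxl _ _ H)|exact (nul_maxr _ _ H)]).
  assert (F : nul (fun n => fsel RB m fst (b n, b' n) (b n))).
  { unfold fsel; simpl. apply nul_max; auto. exact (pm_dom _ _ _ Hm _ _ (nul_maxl _ _ H)). }
  apply (pereq_use _ _ _ _ E) in F. unfold fsel in F; simpl in F.
  apply (np_sym _ HB). exact (nul_maxl _ _ F).
Qed.



Section PB.
Context {X Y : Type} (dX : X -> X -> R) (dY : Y -> Y -> R) (HX : is_met1 dX) (HY : is_met1 dY)
  (f : X -> Y) (Hf : unif_cont dX dY f) (S : subrep Y) (HS : is_per (srel S))
  (Hm : is_permor (srel S) dY (smor S)).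

Notation RS := (srel S). Notation mS := (smor S).
Definition pw (p : X * sdom S) : R := mS (snd p) (f (fst p)).
Definition RPb (p p' : X * sdom S) : R :=
  Rmax (Rmax (dX (fst p) (fst p')) (RS (snd p) (snd p'))) (Rmax (pw p) (pw p')).
Definition mPb (p : X * sdom S) (x : X) : R := Rmax (dX (fst p) x) (pw p).
Definition qb (p : X * sdom S) (s : sdom S) : R := Rmax (RS (snd p) s) (pw p).
Definition Pb : subrep X := Subrep (X * sdom S) RPb mPb.

Lemma pw_val p : 0 <= pw p <= 1. Proof. apply (pm_val _ _ _ Hm). Qed.
Lemma RPb_val p p' : 0 <= RPb p p' <= 1.
Proof. unfold RPb. assert (A1 := met_val dX HX (fst p) (fst p')). assert (A2 := per_val _ HS (snd p) (snd p')).
  assert (A3 := pw_val p). assert (A4 := pw_val p').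
  split; [apply Rmax_nonneg, Rmax_nonneg; lra|apply Rmax_le1; apply Rmax_le1; lra]. Qed.

Lemma pw_RP (p : nat -> X * sdom S) : nul (fun n => pw (p n)) -> nul (fun n => RPb (p n) (p n)).
Proof. intro H. unfold RPb. apply nul_max; [apply nul_max|nmax]. apply nd_refl; auto.
  exact (pm_dom _ _ _ Hm _ _ H). Qed.

Lemma RPb_per : is_per RPb.
Proof. split; [intros [p p']; apply RPb_val|split].
  - apply sqE2; intros p p' H; simpl in *. unfold RPb in *.
    assert (HA := nul_maxl _ _ H). assert (D := nul_maxr _ _ H).
    apply nul_max; apply nul_max.
    + apply (nd_sym dX HX). exact (nul_maxl _ _ HA).
    + apply (np_sym _ HS). exact (nul_maxr _ _ HA).
    + exact (nul_maxr _ _ D). + exact (nul_maxl _ _ D).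
  - apply sqE3; intros p q r H; simpl in *. unfold RPb in *.
    assert (HA := nul_maxl _ _ H). assert (D := nul_maxr _ _ H).
    apply nul_max; apply nul_max.
    + apply (nd_tri dX HX _ (fun n => fst (q n))). exact (nul_maxl _ _ (nul_maxl _ _ HA)). exact (nul_maxl _ _ (nul_maxl _ _ D)).
    + apply (np_trans _ HS _ (fun n => snd (q n))). exact (nul_maxr _ _ (nul_maxl _ _ HA)). exact (nul_maxr _ _ (nul_maxl _ _ D)).
    + exact (nul_maxl _ _ (nul_maxr _ _ HA)). + exact (nul_maxr _ _ (nul_maxr _ _ D)).
Qed.

Lemma mPb_mor : is_permor RPb dX mPb.
Proof. unfold mPb.
  split; [intros [p x]; simpl; assert (A1 := met_val dX HX (fst p) x); assert (A2 := pw_val p); split; [apply Rmax_nonneg; lra|apply Rmax_le1; lra]|].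
  split; [apply sqE2; intros p x H; simpl in *|].
  { apply nul_max. apply pw_RP. exact (nul_maxr _ _ H). apply nd_refl; auto. }
  split; [apply sqE4; intros p x p' x' H; simpl in *|].
  { assert (HA := nul_maxl _ _ (nul_maxl _ _ H)). assert (Bq := nul_maxr _ _ (nul_maxl _ _ H)).
    assert (D := nul_maxr _ _ H). unfold RPb in Bq. apply nul_max.
    - apply (nd_tri dX HX _ (fun n => fst (p n))). apply (nd_sym dX HX). exact (nul_maxl _ _ (nul_maxl _ _ Bq)).
      apply (nd_tri dX HX _ x); auto. exact (nul_maxl _ _ HA).
    - exact (nul_maxr _ _ (nul_maxr _ _ Bq)). }
  split; [apply sqE3; intros p x x' H; simpl in *|].
  { apply (nd_tri dX HX _ (fun n => fst (p n))). apply (nd_sym dX HX). exact (nul_maxl _ _ (nul_maxl _ _ H)). exact (nul_maxl _ _ (nul_maxr _ _ H)). }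
  apply sqE; intros p H. apply (nul_inf_intro _ (fun n => fst (p n))).
  - intros; apply Rmax_nonneg, (met_val dX HX).
  - apply nul_max. apply nd_refl; auto. unfold RPb in H. exact (nul_maxl _ _ (nul_maxr _ _ H)).
Qed.

Lemma qb_mor : is_permor RPb RS qb.
Proof. unfold qb.
  split; [intros [p s]; simpl; assert (A1 := per_val _ HS (snd p) s); assert (A2 := pw_val p); split; [apply Rmax_nonneg; lra|apply Rmax_le1; lra]|].
  split; [apply sqE2; intros p s H; simpl in *|].
  { apply nul_max. apply pw_RP. exact (nul_maxr _ _ H). exact (np_refl_r _ HS _ _ (nul_maxl _ _ H)). }
  split; [apply sqE4; intros p s p' s' H; simpl in *|].
  { assert (HA := nul_maxl _ _ (nul_maxl _ _ H)). assert (Bq := nul_maxr _ _ (nul_maxl _ _ H)).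
    assert (D := nul_maxr _ _ H). unfold RPb in Bq. apply nul_max.
    - apply (np_trans _ HS _ (fun n => snd (p n))). apply (np_sym _ HS). exact (nul_maxr _ _ (nul_maxl _ _ Bq)).
      apply (np_trans _ HS _ s); auto. exact (nul_maxl _ _ HA).
    - exact (nul_maxr _ _ (nul_maxr _ _ Bq)). }
  split; [apply sqE3; intros p s s' H; simpl in *|].
  { apply (np_trans _ HS _ (fun n => snd (p n))). apply (np_sym _ HS). exact (nul_maxl _ _ (nul_maxl _ _ H)). exact (nul_maxl _ _ (nul_maxr _ _ H)). }
  apply sqE; intros p H. unfold RPb in H. apply (nul_inf_intro _ (fun n => snd (p n))).
  - intros; apply Rmax_nonneg, (per_val _ HS).
  - apply nul_max. exact (nul_maxr _ _ (nul_maxl _ _ H)). exact (nul_maxl _ _ (nul_maxr _ _ H)).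
Qed.

Lemma Pb_square : pereq (pcomp mPb (Gmor dY f)) (pcomp qb mS).
Proof. apply sqE2; intros p y H; simpl in *.
  destruct (pcomp_elim _ _ _ _ mPb_mor p y H) as [x [H1 H2]]. unfold mPb, Gmor, pw in *.
  assert (W := nul_maxr _ _ H1).
  apply (pcomp_intro _ _ _ _ qb_mor p (fun n => snd (p n))).
  - unfold qb, pw. apply nul_max; auto. exact (pm_dom _ _ _ Hm _ _ W).
  - apply (pm_ext _ _ _ Hm (fun n => snd (p n)) _ (fun n => f (fst (p n))) y); auto. exact (pm_dom _ _ _ Hm _ _ W).
    apply (nd_tri dY HY _ (fun n => f (x n))); auto. apply (uc_nul dX dY f); auto. exact (nul_maxl _ _ H1).
Qed.

Lemma Pb_pullback : is_pullback dX (Gmor dY f) S Pb qb.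
Proof.
  assert (Gm := Gmor_mor dX dY f HX HY Hf).
  split; [apply RPb_per|split; [apply mPb_mor|split; [apply qb_mor|split; [apply Pb_square|]]]].
  intros C RC u v HC Hu Hv Huv.
  assert (Lw : forall (c : nat -> C) x s, nul (fun n => u (c n) (x n)) -> nul (fun n => v (c n) (s n)) ->
     nul (fun n => pw (x n, s n))).
  { intros c x s H1 H2. assert (A : nul (fun n => pcomp u (Gmor dY f) (c n) (f (x n)))).
    { apply (pcomp_intro _ _ _ _ Hu c x); auto. unfold Gmor; apply nd_refl; auto. }
    apply (pereq_use _ _ _ _ Huv) in A. destruct (pcomp_elim _ _ _ _ Hv _ _ A) as [s' [B1 B2]].
    unfold pw; simpl. apply (pm_ext _ _ _ Hm s' s (fun n => f (x n)) (fun n => f (x n))); auto.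
    exact (pm_fun _ _ _ Hv c s' s B1 H2). apply nd_refl; auto. }
  split.
  - exists (fun c p => Rmax (u c (fst p)) (v c (snd p))).
    assert (Hh : is_permor RC RPb (fun c p => Rmax (u c (fst p)) (v c (snd p)))).
    { split; [intros [c p]; simpl; assert (A1 := pm_val _ _ _ Hu c (fst p)); assert (A2 := pm_val _ _ _ Hv c (snd p)); split; [apply Rmax_nonneg; lra|apply Rmax_le1; lra]|].
      split; [apply sqE2; intros c p H; simpl in *|].
      { apply nul_max. exact (pm_dom _ _ _ Hu _ _ (nul_maxl _ _ H)). apply pw_RP.
        apply (Lw c (fun n => fst (p n)) (fun n => snd (p n))). exact (nul_maxl _ _ H). exact (nul_maxr _ _ H). }
      split; [apply sqE4; intros c p c' p' H; simpl in *|].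
      { assert (HA := nul_maxl _ _ (nul_maxl _ _ H)). assert (Bq := nul_maxr _ _ (nul_maxl _ _ H)).
        assert (D := nul_maxr _ _ H). unfold RPb in D. apply nul_max.
        - apply (pm_ext _ _ _ Hu c c' (fun n => fst (p n))); auto. exact (nul_maxl _ _ HA). exact (nul_maxl _ _ (nul_maxl _ _ D)).
        - apply (pm_ext _ _ _ Hv c c' (fun n => snd (p n))); auto. exact (nul_maxr _ _ HA). exact (nul_maxr _ _ (nul_maxl _ _ D)). }
      split; [apply sqE3; intros c p p' H; simpl in *|].
      { assert (HA := nul_maxl _ _ H). assert (Bq := nul_maxr _ _ H). unfold RPb. apply nul_max; apply nul_max.
        - apply (pm_fun _ _ _ Hu c). exact (nul_maxl _ _ HA). exact (nul_maxl _ _ Bq).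
        - apply (pm_fun _ _ _ Hv c). exact (nul_maxr _ _ HA). exact (nul_maxr _ _ Bq).
        - apply (Lw c (fun n => fst (p n)) (fun n => snd (p n))). exact (nul_maxl _ _ HA). exact (nul_maxr _ _ HA).
        - apply (Lw c (fun n => fst (p' n)) (fun n => snd (p' n))). exact (nul_maxl _ _ Bq). exact (nul_maxr _ _ Bq). }
      apply sqE; intros c H. destruct (pm_tot _ _ _ Hu c H) as [x Hx]. destruct (pm_tot _ _ _ Hv c H) as [s Hs].
      apply (nul_inf_intro _ (fun n => (x n, s n))).
      * intros; apply Rmax_nonneg, (pm_val _ _ _ Hu).
      * simpl; nmax. }
    split; [exact Hh|split].
    + apply sqE2; intros c x H; simpl in *.
      destruct (pcomp_elim _ _ _ _ Hh c x H) as [p [H1 H2]]. simpl in H1. unfold mPb in H2.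
      apply (pm_ext _ _ _ Hu c c (fun n => fst (p n))). exact (nul_maxl _ _ H1). exact (pm_dom _ _ _ Hu _ _ (nul_maxl _ _ H1)). exact (nul_maxl _ _ H2).
    + apply sqE2; intros c s H; simpl in *.
      destruct (pcomp_elim _ _ _ _ Hh c s H) as [p [H1 H2]]. simpl in H1. unfold qb in H2.
      apply (pm_ext _ _ _ Hv c c (fun n => snd (p n))). exact (nul_maxr _ _ H1). exact (pm_dom _ _ _ Hv _ _ (nul_maxr _ _ H1)). exact (nul_maxl _ _ H2).
  - intros h h' Hh Hh' E1 E2. apply sqE2; intros c p H; simpl in *.
    assert (Rp := pm_cod _ _ _ Hh _ _ H). assert (W : nul (fun n => pw (p n))) by (unfold RPb in Rp; exact (nul_maxl _ _ (nul_maxr _ _ Rp))).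
    assert (A1 : nul (fun n => pcomp h mPb (c n) (fst (p n)))).
    { apply (pcomp_intro _ _ _ _ Hh c p); auto. unfold mPb; apply nul_max; auto. apply nd_refl; auto. }
    assert (A2 : nul (fun n => pcomp h qb (c n) (snd (p n)))).
    { apply (pcomp_intro _ _ _ _ Hh c p); auto. unfold qb; apply nul_max; auto. exact (pm_dom _ _ _ Hm _ _ W). }
    apply (pereq_use _ _ _ _ E1) in A1. apply (pereq_use _ _ _ _ E2) in A2.
    destruct (pcomp_elim _ _ _ _ Hh' _ _ A1) as [p1 [B1 C1]].
    destruct (pcomp_elim _ _ _ _ Hh' _ _ A2) as [p2 [B2 C2]].
    unfold mPb in C1. unfold qb in C2.
    assert (D := pm_fun _ _ _ Hh' c p1 p2 B1 B2). unfold RPb in D.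
    assert (Rp1 := pm_cod _ _ _ Hh' _ _ B1). unfold RPb in Rp1.
    apply (pm_ext _ _ _ Hh' c c p1 p); auto. exact (pm_dom _ _ _ Hh _ _ H).
    unfold RPb. apply nul_max; apply nul_max; auto.
    + exact (nul_maxl _ _ C1).
    + apply (np_trans _ HS _ (fun n => snd (p2 n))). exact (nul_maxr _ _ (nul_maxl _ _ D)). exact (nul_maxl _ _ C2).
    + exact (nul_maxl _ _ (nul_maxr _ _ Rp1)).
Qed.
End PB.



Lemma cmt_comp {X Y} (dX : X -> X -> R) (dY : Y -> Y -> R) (f : X -> Y) psi :
  CMT dY psi -> unif_cont dX dY f -> CMT dX (fun x => psi (f x)).
Proof. intros [Hv Hc] Hf. split; [intro; apply Hv|]. intros e He.
  destruct (Hc e He) as [d1 [Hd1 H1]]. destruct (Hf d1 Hd1) as [d2 [Hd2 H2]].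
  exists d2; split; auto. Qed.

Section PBEta.
Context {X Y : Type} (dX : X -> X -> R) (dY : Y -> Y -> R) (HX : is_met1 dX) (HY : is_met1 dY)
  (f : X -> Y) (Hf : unif_cont dX dY f) (psi : Y -> R) (Hpsi : CMT dY psi).

Definition thf := fun x => psi (f x).
Lemma Hthf : CMT dX thf. Proof. apply (cmt_comp dX dY); auto. Qed.
Lemma Hle_f : sq thf (fun z => sig (eta dY psi) (f z)).
Proof. apply sqE; intros x H. exact (sq_use _ _ (fun n => f (x n)) (sig_eta1 dY HY psi Hpsi) H). Qed.

Definition qf := kA f thf (eta dY psi).

Lemma qf_mor : is_permor (simr dX thf) (simr dY psi) qf.
Proof. exact (kA_mor dX dY HX f Hf thf Hthf (eta dY psi) (simr_mor dY HY psi Hpsi) (simr_inj dY HY psi) Hle_f). Qed.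

Lemma pb_eta : is_pullback dX (Gmor dY f) (eta dY psi) (eta dX thf) qf.
Proof.
  assert (Gm := Gmor_mor dX dY f HX HY Hf).
  assert (Sm := simr_mor dY HY psi Hpsi). assert (Pm := simr_mor dX HX thf Hthf).
  assert (Sp := simr_per dY HY psi Hpsi).
  cbn [eta sdom srel smor].
  split; [apply (simr_per dX HX thf Hthf)|split; [exact Pm|split; [exact qf_mor|split]]].
  { apply sqE2; intros x y H; simpl in *.
    destruct (pcomp_elim _ _ _ _ Pm x y H) as [x' [H1 H2]]. unfold Gmor in H2.
    assert (A := nsim_l dX _ _ _ H1). unfold thf in A.
    assert (D : nul (fun n => dY (f (x n)) (y n))).
    { apply (nd_tri dY HY _ (fun n => f (x' n))); auto. apply (uc_nul dX dY f); auto. exact (nsim_r dX _ _ _ H1). }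
    apply (pcomp_intro _ _ _ _ qf_mor x (fun n => f (x n))).
    - unfold qf, kA, thf. cbn [eta smor]. apply nul_max; auto. apply nsim_i; auto. apply nd_refl; auto.
    - apply nsim_i; auto. }
  intros C RC u v HC Hu Hv Huv.
  assert (Lw : forall (c : nat -> C) x, nul (fun n => u (c n) (x n)) -> nul (fun n => thf (x n))).
  { intros c x H1. assert (A : nul (fun n => pcomp u (Gmor dY f) (c n) (f (x n)))).
    { apply (pcomp_intro _ _ _ _ Hu c x); auto. unfold Gmor; apply nd_refl; auto. }
    apply (pereq_use _ _ _ _ Huv) in A. destruct (pcomp_elim _ _ _ _ Hv _ _ A) as [y [B1 B2]].
    unfold thf. apply (cmt_nul dY psi y); auto. exact (nsim_r dY _ _ _ B2). exact (nsim_l dY _ _ _ B2). }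
  split.
  - exists u.
    assert (Hh : is_permor RC (simr dX thf) u).
    { split; [apply Hu|].
      split; [apply sqE2; intros c x H; simpl in *|].
      { apply nul_max. exact (pm_dom _ _ _ Hu _ _ H). apply nsim_i. apply (Lw c); auto. apply nd_refl; auto. }
      split; [apply sqE4; intros c x c' x' H; simpl in *|].
      { apply (pm_ext _ _ _ Hu c c' x x'). exact (nul_maxl _ _ (nul_maxl _ _ H)). exact (nul_maxr _ _ (nul_maxl _ _ H)).
        exact (nsim_r dX _ _ _ (nul_maxr _ _ H)). }
      split; [apply sqE3; intros c x x' H; simpl in *|].
      { apply nsim_i. apply (Lw c); exact (nul_maxl _ _ H). exact (pm_fun _ _ _ Hu c x x' (nul_maxl _ _ H) (nul_maxr _ _ H)). }
      exact (proj2 (proj2 (proj2 (proj2 Hu)))). }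
    split; [exact Hh|split].
    + apply sqE2; intros c x H; simpl in *.
      destruct (pcomp_elim _ _ _ _ Hh c x H) as [x1 [H1 H2]].
      apply (pm_ext _ _ _ Hu c c x1 x); auto. exact (pm_dom _ _ _ Hu _ _ H1). exact (nsim_r dX _ _ _ H2).
    + apply sqE2; intros c y H; simpl in *.
      destruct (pcomp_elim _ _ _ _ Hh c y H) as [x [H1 H2]].
      unfold qf, kA in H2. cbn [eta smor] in H2.
      assert (D1 := nsim_r dY _ _ _ (nul_maxr _ _ H2)).
      assert (A : nul (fun n => pcomp u (Gmor dY f) (c n) (f (x n)))).
      { apply (pcomp_intro _ _ _ _ Hu c x); auto. unfold Gmor; apply nd_refl; auto. }
      apply (pereq_use _ _ _ _ Huv) in A. destruct (pcomp_elim _ _ _ _ Hv _ _ A) as [y' [B1 B2]].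
      apply (pm_ext _ _ _ Hv c c y' y); auto. exact (pm_dom _ _ _ Hv _ _ B1).
      apply nsim_i. exact (nsim_l dY _ _ _ B2).
      apply (nd_tri dY HY _ (fun n => f (x n))). exact (nsim_r dY _ _ _ B2). apply (nd_sym dY HY); auto.
  - intros h h' Hh Hh' E1 _. apply sqE2; intros c x H; simpl in *.
    assert (A := pm_cod _ _ _ Hh _ _ H).
    assert (B : nul (fun n => pcomp h (simr dX thf) (c n) (x n))) by (apply (pcomp_intro _ _ _ _ Hh c x); auto).
    apply (pereq_use _ _ _ _ E1) in B.
    destruct (pcomp_elim _ _ _ _ Hh' _ _ B) as [x1 [B1 B2]].
    apply (pm_ext _ _ _ Hh' c c x1 x); auto; first [exact (pm_dom _ _ _ Hh _ _ H)|exact (nsim_r dX _ _ _ B2)].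
Qed.
End PBEta.



Lemma dprod_same {X Y} (dX : X -> X -> R) (dY : Y -> Y -> R) (HY : is_met1 dY) x x' y :
  dprod dX dY (x, y) (x', y) = Rmax (dX x x') 0.
Proof. unfold dprod; simpl; rewrite (met_refl dY HY); reflexivity. Qed.

Lemma cmt_inf {X Y} (dX : X -> X -> R) (dY : Y -> Y -> R) (phi : X * Y -> R) :
  is_met1 dX -> is_met1 dY -> CMT (dprod dX dY) phi -> CMT dX (fun x => inf01 (fun y => phi (x, y))).
Proof. intros HX HY [Hv Hc].
  assert (H0 : forall x y, 0 <= phi (x, y)) by (intros; apply Hv).
  split; [intro x; split; [apply inf01_ge0|apply inf01_le1]; intros; apply H0|].
  intros e He. destruct (Hc (e/2) ltac:(lra)) as [del [Hdel Hd]]. exists del; split; auto.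
  intros x x' Hx.
  assert (K : forall y, Rabs (phi (x, y) - phi (x', y)) < e/2).
  { intro y. apply Hd. rewrite (dprod_same dX dY HY). apply Rmax_lub_lt; auto. }
  assert (K1 : forall y, phi (x, y) - e/2 <= phi (x', y) /\ phi (x', y) - e/2 <= phi (x, y)).
  { intro y; specialize (K y); apply Rabs_def2 in K; lra. }
  assert (A1 : inf01 (fun y => phi (x, y)) - e/2 <= inf01 (fun y => phi (x', y))).
  { apply inf01_glb; [intro; apply H0| |].
    - assert (inf01 (fun y => phi (x, y)) <= 1) by (apply inf01_le1; intro; apply H0). lra.
    - intro y. assert (inf01 (fun y => phi (x, y)) <= phi (x, y)) by (apply (inf01_le (fun y => phi (x, y)) y); intro; apply H0).
      specialize (K1 y); lra. }
  assert (A2 : inf01 (fun y => phi (x', y)) - e/2 <= inf01 (fun y => phi (x, y))).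
  { apply inf01_glb; [intro; apply H0| |].
    - assert (inf01 (fun y => phi (x', y)) <= 1) by (apply inf01_le1; intro; apply H0). lra.
    - intro y. assert (inf01 (fun y => phi (x', y)) <= phi (x', y)) by (apply (inf01_le (fun y => phi (x', y)) y); intro; apply H0).
      specialize (K1 y); lra. }
  apply Rabs_def1; lra.
Qed.

Lemma cmt_sup {X Y} (dX : X -> X -> R) (dY : Y -> Y -> R) (phi : X * Y -> R) :
  is_met1 dX -> is_met1 dY -> CMT (dprod dX dY) phi -> CMT dX (fun x => sup01 (fun y => phi (x, y))).
Proof. intros HX HY [Hv Hc].
  assert (H1 : forall x y, phi (x, y) <= 1) by (intros; apply Hv).
  split; [intro x; split; [apply sup01_ge0|apply sup01_le1]; intros; apply H1|].
  intros e He. destruct (Hc (e/2) ltac:(lra)) as [del [Hdel Hd]]. exists del; split; auto.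
  intros x x' Hx.
  assert (K : forall y, Rabs (phi (x, y) - phi (x', y)) < e/2).
  { intro y. apply Hd. rewrite (dprod_same dX dY HY). apply Rmax_lub_lt; auto. }
  assert (K1 : forall y, phi (x, y) - e/2 <= phi (x', y) /\ phi (x', y) - e/2 <= phi (x, y)).
  { intro y; specialize (K y); apply Rabs_def2 in K; lra. }
  assert (A1 : sup01 (fun y => phi (x, y)) <= sup01 (fun y => phi (x', y)) + e/2).
  { apply sup01_lub; [intro; apply H1| |].
    - assert (0 <= sup01 (fun y => phi (x', y))) by (apply sup01_ge0; intro; apply H1). lra.
    - intro y. assert (phi (x', y) <= sup01 (fun y => phi (x', y))) by (apply (sup01_ge (fun y => phi (x', y)) y); intro; apply H1).
      specialize (K1 y); lra. }
  assert (A2 : sup01 (fun y => phi (x', y)) <= sup01 (fun y => phi (x, y)) + e/2).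
  { apply sup01_lub; [intro; apply H1| |].
    - assert (0 <= sup01 (fun y => phi (x, y))) by (apply sup01_ge0; intro; apply H1). lra.
    - intro y. assert (phi (x, y) <= sup01 (fun y => phi (x, y))) by (apply (sup01_ge (fun y => phi (x, y)) y); intro; apply H1).
      specialize (K1 y); lra. }
  apply Rabs_def1; lra.
Qed.

Section Quant.
Context {X Y : Type} (dX : X -> X -> R) (dY : Y -> Y -> R) (HX : is_met1 dX) (HY : is_met1 dY)
  (phi : X * Y -> R) (Hphi : CMT (dprod dX dY) phi)
  (S : subrep X) (HSp : is_per (srel S)) (Sm : is_permor (srel S) dX (smor S))
  (P : subrep (X * Y)) (q : sdom P -> sdom S -> R)
  (HP : is_pullback (dprod dX dY) (Gmor dX (@fst X Y)) S P q).

Notation dd := (dprod dX dY).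

Lemma HPm : is_permor (srel P) dd (smor P). Proof. apply HP. Qed.

Lemma sigP_sigS : sq (sig P) (fun z => sig S (fst z)).
Proof. destruct HP as [HPp [HPm' [Hq [Hsq _]]]].
  apply sqE; intros z H. destruct (sig_elim dd dd P z HPm' H) as [p Hp].
  assert (A : nul (fun n => pcomp (smor P) (Gmor dX fst) (p n) (fst (z n)))).
  { apply (pcomp_intro _ _ _ _ HPm' p z); auto. unfold Gmor; apply nd_refl; auto. }
  apply (pereq_use _ _ _ _ Hsq) in A. destruct (pcomp_elim _ _ _ _ Hq _ _ A) as [s [_ B]].
  exact (sig_intro dX S _ s Sm B).
Qed.

(* test object *)
Definition RCt (c c' : sdom S * Y) : R := Rmax (srel S (fst c) (fst c')) (dY (snd c) (snd c')).
Definition ut (c : sdom S * Y) (z : X * Y) : R := Rmax (smor S (fst c) (fst z)) (dY (snd c) (snd z)).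
Definition vt (c : sdom S * Y) (s : sdom S) : R := srel S (fst c) s.

Lemma RCt_per : is_per RCt.
Proof. unfold RCt. split; [intros [c c']; simpl; assert (A1 := per_val _ HSp (fst c) (fst c')); assert (A2 := met_val dY HY (snd c) (snd c')); split; [apply Rmax_nonneg; lra|apply Rmax_le1; lra]|split].
  - apply sqE2; intros c c' H; simpl in *. apply nul_max. apply (np_sym _ HSp); exact (nul_maxl _ _ H). apply (nd_sym dY HY); exact (nul_maxr _ _ H).
  - apply sqE3; intros a b c H; simpl in *. apply nul_max.
    apply (np_trans _ HSp _ (fun n => fst (b n))). exact (nul_maxl _ _ (nul_maxl _ _ H)). exact (nul_maxl _ _ (nul_maxr _ _ H)).
    apply (nd_tri dY HY _ (fun n => snd (b n))). exact (nul_maxr _ _ (nul_maxl _ _ H)). exact (nul_maxr _ _ (nul_maxr _ _ H)).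
Qed.

Lemma ut_mor : is_permor RCt dd ut.
Proof. unfold ut, RCt.
  split; [intros [c z]; simpl; assert (A1 := pm_val _ _ _ Sm (fst c) (fst z)); assert (A2 := met_val dY HY (snd c) (snd z)); split; [apply Rmax_nonneg; lra|apply Rmax_le1; lra]|].
  split; [apply sqE2; intros c z H; simpl in *|].
  { apply nul_max. apply nul_max. exact (pm_dom _ _ _ Sm _ _ (nul_maxl _ _ H)). apply nd_refl; auto. apply nd_refl; apply dprod_met; auto. }
  split; [apply sqE4; intros c z c' z' H; simpl in *|].
  { assert (HA := nul_maxl _ _ (nul_maxl _ _ H)). assert (Bq := nul_maxr _ _ (nul_maxl _ _ H)).
    assert (D := nul_maxr _ _ H). apply nul_max.
    - apply (pm_ext _ _ _ Sm (fun n => fst (c n)) _ (fun n => fst (z n))). exact (nul_maxl _ _ HA). exact (nul_maxl _ _ Bq). exact (nprod_l dX dY _ _ D).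
    - apply (nd_tri dY HY _ (fun n => snd (c n))). apply (nd_sym dY HY). exact (nul_maxr _ _ Bq).
      apply (nd_tri dY HY _ (fun n => snd (z n))). exact (nul_maxr _ _ HA). exact (nprod_r dX dY _ _ D). }
  split; [apply sqE3; intros c z z' H; simpl in *|].
  { apply nprod_i. apply (pm_fun _ _ _ Sm (fun n => fst (c n))). exact (nul_maxl _ _ (nul_maxl _ _ H)). exact (nul_maxl _ _ (nul_maxr _ _ H)).
    apply (nd_tri dY HY _ (fun n => snd (c n))). apply (nd_sym dY HY). exact (nul_maxr _ _ (nul_maxl _ _ H)). exact (nul_maxr _ _ (nul_maxr _ _ H)). }
  apply sqE; intros c H. destruct (pm_tot _ _ _ Sm (fun n => fst (c n)) (nul_maxl _ _ H)) as [x Hx].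
  apply (nul_inf_intro _ (fun n => (x n, snd (c n)))). intros; apply Rmax_nonneg, (pm_val _ _ _ Sm).
  simpl. apply nul_max; auto. apply nd_refl; auto.
Qed.

Lemma vt_mor : is_permor RCt (srel S) vt.
Proof. unfold vt, RCt.
  split; [intros [c s]; apply (per_val _ HSp)|].
  split; [apply sqE2; intros c s H; simpl in *|].
  { apply nul_max. apply nul_max. exact (np_refl_l _ HSp _ _ H). apply nd_refl; auto. exact (np_refl_r _ HSp _ _ H). }
  split; [apply sqE4; intros c s c' s' H; simpl in *|].
  { apply (np_trans _ HSp _ (fun n => fst (c n))). apply (np_sym _ HSp). exact (nul_maxl _ _ (nul_maxr _ _ (nul_maxl _ _ H))).
    apply (np_trans _ HSp _ s). exact (nul_maxl _ _ (nul_maxl _ _ H)). exact (nul_maxr _ _ H). }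
  split; [apply sqE3; intros c s s' H; simpl in *|].
  { apply (np_trans _ HSp _ (fun n => fst (c n))). apply (np_sym _ HSp). exact (nul_maxl _ _ H). exact (nul_maxr _ _ H). }
  apply sqE; intros c H. apply (nul_inf_intro _ (fun n => fst (c n))). intros; apply (per_val _ HSp).
  exact (nul_maxl _ _ H).
Qed.

Lemma sigS_sigP : sq (fun z => sig S (fst z)) (sig P).
Proof.
  destruct HP as [HPp [HPm' [Hq [Hsq Huniv]]]].
  assert (Huv : pereq (pcomp ut (Gmor dX fst)) (pcomp vt (smor S))).
  { apply sqE2; intros c x H; simpl in *.
    destruct (pcomp_elim _ _ _ _ ut_mor c x H) as [z [H1 H2]]. unfold ut in H1. unfold Gmor in H2.
    apply (pcomp_intro _ _ _ _ vt_mor c (fun n => fst (c n))).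
    - unfold vt. exact (pm_dom _ _ _ Sm _ _ (nul_maxl _ _ H1)).
    - apply (pm_ext _ _ _ Sm (fun n => fst (c n)) _ (fun n => fst (z n))); auto. exact (nul_maxl _ _ H1).
      exact (pm_dom _ _ _ Sm _ _ (nul_maxl _ _ H1)). }
  destruct (Huniv _ _ _ _ RCt_per ut_mor vt_mor Huv) as [[h [Hh [E1 _]]] _].
  assert (E := morph_eqv _ _ _ _ (met_per _ (dprod_met dX dY HX HY)) (pcomp_mor _ _ _ _ _ Hh HPm') ut_mor E1).
  apply sqE; intros z H. destruct (sig_elim dX dX S _ Sm H) as [s Hs].
  assert (A : nul (fun n => ut (s n, snd (z n)) (z n))).
  { unfold ut; simpl. apply nul_max; auto. apply nd_refl; auto. }
  apply (pereq_use _ _ (fun n => (s n, snd (z n))) z E) in A.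
  destruct (pcomp_elim _ _ _ _ Hh _ _ A) as [p [_ B]].
  exact (sig_intro dd P z p HPm' B).
Qed.
End Quant.

Lemma thm_exists {X Y : Type} (dX : X -> X -> R) (dY : Y -> Y -> R) (phi : X * Y -> R) :
  is_cmet1 dX -> is_cmet1 dY -> CMT (dprod dX dY) phi ->
  forall (S : subrep X) (P : subrep (X * Y)) (q : sdom P -> sdom S -> R),
    is_subobj dX S -> is_pullback (dprod dX dY) (Gmor dX (@fst X Y)) S P q ->
    (sub_le (eta (dprod dX dY) phi) P <->
     sub_le (eta dX (fun x => inf01 (fun y : Y => phi (x, y)))) S).
Proof.
  intros [HX _] [HY _] Hphi S P q [HSp HSm] HP.
  assert (Sm : is_permor (srel S) dX (smor S)) by apply HSm.
  assert (Sinj := mono_inj _ _ _ HSp HSm).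
  assert (Hd := dprod_met dX dY HX HY).
  assert (Hex := cmt_inf dX dY phi HX HY Hphi).
  assert (H0 : forall z, 0 <= phi z) by (intro; apply Hphi).
  split.
  - intro H. assert (A := partA1 _ phi P Hd Hphi (HPm dX dY S P q HP) H).
    apply (partA2 dX _ S HX Hex Sm Sinj). apply sqE; intros x Hx.
    destruct (nul_inf (fun n y => phi (x n, y)) (fun n y => H0 _) Hx) as [y Hy].
    assert (B := sq_use _ _ (fun n => (x n, y n)) A Hy).
    exact (sq_use _ _ _ (sigP_sigS dX dY HX S Sm P q HP) B).
  - intro H. assert (A := partA1 _ _ S HX Hex Sm H).
    destruct HP as [HPp [HPm' [Hq [Hsq Huniv]]]].
    assert (Hle : sq phi (fun z => sig S (fst z))).
    { apply sqE; intros z Hz. apply (sq_use _ _ (fun n => fst (z n)) A).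
      apply (nul_le _ _ (fun n => inf01_le (fun y => phi (fst (z n), y)) (snd (z n)) (fun y => H0 _))).
      simpl. eapply nul_le; [|exact Hz]. intro n; rewrite <- surjective_pairing; lra. }
    assert (Hv := kA_mor (dprod dX dY) dX Hd fst (uc_fst dX dY) phi Hphi S Sm Sinj Hle).
    assert (Hu := simr_mor _ Hd phi Hphi).
    assert (Huv : pereq (pcomp (simr (dprod dX dY) phi) (Gmor dX fst)) (pcomp (kA fst phi S) (smor S))).
    { apply sqE2; intros z x Hn; simpl in *.
      destruct (pcomp_elim _ _ _ _ Hu z x Hn) as [z' [H1 H2]]. unfold Gmor in H2.
      assert (Pz := nsim_l _ _ _ _ H1).
      assert (Dx : nul (fun n => dX (fst (z n)) (x n))).
      { apply (nd_tri dX HX _ (fun n => fst (z' n))); auto. exact (nprod_l dX dY _ _ (nsim_r _ _ _ _ H1)). }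
      destruct (sig_elim dX dX S _ Sm (sq_use _ _ z Hle Pz)) as [s Hs].
      apply (pcomp_intro _ _ _ _ Hv z s).
      - unfold kA. nmax.
      - apply (pm_ext _ _ _ Sm s s (fun n => fst (z n))); auto. exact (pm_dom _ _ _ Sm _ _ Hs). }
    destruct (Huniv _ _ _ _ (simr_per _ Hd phi Hphi) Hu Hv Huv) as [[h [Hh [E1 _]]] _].
    exists h. cbn [eta sdom srel smor]. split; auto.
Qed.

Lemma thm_forall {X Y : Type} (dX : X -> X -> R) (dY : Y -> Y -> R) (phi : X * Y -> R) :
  is_cmet1 dX -> is_cmet1 dY -> CMT (dprod dX dY) phi ->
  forall (S : subrep X) (P : subrep (X * Y)) (q : sdom P -> sdom S -> R),
    is_subobj dX S -> is_pullback (dprod dX dY) (Gmor dX (@fst X Y)) S P q ->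
    (sub_le P (eta (dprod dX dY) phi) <->
     sub_le S (eta dX (fun x => sup01 (fun y : Y => phi (x, y))))).
Proof.
  intros [HX _] [HY _] Hphi S P q [HSp HSm] HP.
  assert (Sm : is_permor (srel S) dX (smor S)) by apply HSm.
  assert (Hd := dprod_met dX dY HX HY).
  assert (Hsup := cmt_sup dX dY phi HX HY Hphi).
  assert (H1 : forall z, phi z <= 1) by (intro; apply Hphi).
  split.
  - intro H. assert (A := partB1 _ phi P Hd Hphi (HPm dX dY S P q HP) H).
    assert (B := sq_trans _ _ _ (sigS_sigP dX dY HX HY S HSp Sm P q HP) A).
    apply (partB2 dX _ S HX ltac:(apply Hsup) Sm).
    intros e He. destruct (B e He) as [del [Hdel Hb]]. exists del; split; auto.
    intros x Hx. apply sup01_lub; [intro; apply H1|lra|]. intro y. exact (Hb (x, y) Hx).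
  - intro H. assert (A := partB1 _ _ S HX Hsup Sm H).
    assert (B : sq (fun z : X * Y => sig S (fst z)) phi).
    { intros e He. destruct (A e He) as [del [Hdel Hb]]. exists del; split; auto.
      intros [x y] Hz. simpl in Hz. specialize (Hb x Hz). 
      assert (phi (x, y) <= sup01 (fun y => phi (x, y))) by (apply (sup01_ge (fun y => phi (x, y))); intro; apply H1). lra. }
    apply (partB2 _ phi P Hd ltac:(apply Hphi) (HPm dX dY S P q HP)).
    exact (sq_trans _ _ _ (sigP_sigS dX dY HX S Sm P q HP) B).
Qed.

Lemma thm_eq {X : Type} (d : X -> X -> R) : is_cmet1 d ->
  sub_le (eta (dprod d d) (fun p => d (fst p) (snd p))) (diag_sub d) /\
  sub_le (diag_sub d) (eta (dprod d d) (fun p => d (fst p) (snd p))).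
Proof.
  intros [Hd _]. assert (Hdd := dprod_met d d Hd Hd).
  assert (Huc : unif_cont d (dprod d d) (fun x => (x, x))).
  { apply sq_uc; apply sqE2; intros x y H; simpl in *. apply nprod_i; simpl; auto. }
  assert (Dm : is_permor (srel (diag_sub d)) (dprod d d) (smor (diag_sub d))).
  { cbn [diag_sub srel smor]. apply Gmor_mor; auto. }
  assert (Hth : CMT (dprod d d) (fun p => d (fst p) (snd p))).
  { split; [intro; apply (met_val d Hd)|]. intros e He. exists (e/2); split; [lra|].
    intros [x y] [x' y'] Hl; simpl in *. unfold dprod in Hl; simpl in Hl.
    assert (A1 := Rmax_l (d x x') (d y y')). assert (A2 := Rmax_r (d x x') (d y y')).
    assert (T1 := met_tri d Hd x x' y). assert (T2 := met_tri d Hd x' y' y).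
    assert (T3 := met_tri d Hd x' x y'). assert (T4 := met_tri d Hd x y y').
    rewrite (met_sym d Hd x' x) in T3. rewrite (met_sym d Hd y' y) in T2.
    apply Rabs_def1; lra. }
  split.
  - apply (partA2 _ _ _ Hdd Hth Dm).
    + cbn [diag_sub srel smor]. apply sqE3; intros z z' a H; simpl in *. unfold Gmor, dprod in H; simpl in H.
      apply (nd_tri d Hd _ (fun n => fst (a n))). exact (nul_maxl _ _ (nul_maxl _ _ H)).
      apply (nd_sym d Hd). exact (nul_maxl _ _ (nul_maxr _ _ H)).
    + apply sqE; intros z H. apply (sig_intro _ (diag_sub d) z (fun n => fst (z n)) Dm).
      cbn [diag_sub smor]. unfold Gmor, dprod; simpl. apply nul_max; auto. apply nd_refl; auto.
  - apply (partB2 _ _ _ Hdd ltac:(intro; apply (met_val d Hd)) Dm).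
    apply sqE; intros z H. destruct (sig_elim d (dprod d d) (diag_sub d) z Dm H) as [s Hs].
    cbn [diag_sub smor] in Hs. unfold Gmor, dprod in Hs; simpl in Hs.
    apply (nd_tri d Hd _ s). apply (nd_sym d Hd). exact (nul_maxl _ _ Hs). exact (nul_maxr _ _ Hs).
Qed.


Lemma eta_le {X} (dX : X -> X -> R) (phi psi : X -> R) :
  is_met1 dX -> CMT dX phi -> CMT dX psi -> (sq phi psi <-> sub_le (eta dX phi) (eta dX psi)).
Proof. intros Hd Hphi Hpsi. split.
  - intro H. apply (partA2 dX phi (eta dX psi) Hd Hphi (simr_mor dX Hd psi Hpsi) (simr_inj dX Hd psi)).
    exact (sq_trans _ _ _ H (sig_eta1 dX Hd psi Hpsi)).
  - intro H. assert (A := partA1 dX phi (eta dX psi) Hd Hphi (simr_mor dX Hd psi Hpsi) H).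
    exact (sq_trans _ _ _ A (sig_eta2 dX Hd psi Hpsi)).
Qed.

Lemma sq_pw {Z} (a b : Z -> R) : (forall z, b z <= a z) -> sq a b.
Proof. intro H; apply sqE; intros z Hz; apply (nul_le _ _ (fun n => H (z n))); auto. Qed.

Lemma sq_min {Z} (a b c : Z -> R) : sq a c -> sq b c -> sq (fun z => Rmin (a z) (b z)) c.
Proof. intros H1 H2 e He. destruct (H1 e He) as [d1 [Hd1 K1]]. destruct (H2 e He) as [d2 [Hd2 K2]].
  exists (Rmin d1 d2); split; [apply Rmin_pos; auto|]. intros z Hz.
  destruct (Rle_dec (a z) (b z)) as [h|h].
  - rewrite Rmin_left in Hz by auto. apply K1. eapply Rle_trans; [exact Hz|apply Rmin_l].
  - rewrite Rmin_right in Hz by lra. apply K2. eapply Rle_trans; [exact Hz|apply Rmin_r].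
Qed.
Theorem mainTheorem18 :
  (* --- G is a functor cMet_1 -> PER(U) --- *)
  (forall (X : Type) (dX : X -> X -> R), is_cmet1 dX -> is_per dX) /\
  (forall (X Y : Type) (dX : X -> X -> R) (dY : Y -> Y -> R) (f : X -> Y),
     is_cmet1 dX -> is_cmet1 dY -> unif_cont dX dY f -> is_permor dX dY (Gmor dY f)) /\
  (forall (X : Type) (dX : X -> X -> R), is_cmet1 dX ->
     pereq (Gmor dX (fun x : X => x)) dX) /\
  (forall (X Y Z : Type) (dX : X -> X -> R) (dY : Y -> Y -> R) (dZ : Z -> Z -> R)
     (f : X -> Y) (g : Y -> Z),
     is_cmet1 dX -> is_cmet1 dY -> is_cmet1 dZ -> unif_cont dX dY f -> unif_cont dY dZ g ->
     pereq (Gmor dZ (fun x => g (f x))) (pcomp (Gmor dY f) (Gmor dZ g))) /\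
  (* --- G is full and faithful --- *)
  (forall (X Y : Type) (dX : X -> X -> R) (dY : Y -> Y -> R) (F : X -> Y -> R),
     is_cmet1 dX -> is_cmet1 dY -> is_permor dX dY F ->
     exists f : X -> Y, unif_cont dX dY f /\ pereq (Gmor dY f) F) /\
  (forall (X Y : Type) (dX : X -> X -> R) (dY : Y -> Y -> R) (f g : X -> Y),
     is_cmet1 dX -> is_cmet1 dY -> unif_cont dX dY f -> unif_cont dX dY g ->
     pereq (Gmor dY f) (Gmor dY g) -> f = g) /\
  (* --- G preserves finite products --- *)
  is_per_terminal dunit /\
  (forall (X Y : Type) (dX : X -> X -> R) (dY : Y -> Y -> R),
     is_cmet1 dX -> is_cmet1 dY ->
     is_per_product (dprod dX dY) dX dY
       (Gmor dX (@fst X Y)) (Gmor dY (@snd X Y))) /\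
  (* --- pullbacks along G-morphisms exist in PER(U) (reindexing of Sub) --- *)
  (forall (X Y : Type) (dX : X -> X -> R) (dY : Y -> Y -> R) (f : X -> Y) (S : subrep Y),
     is_cmet1 dX -> is_cmet1 dY -> unif_cont dX dY f -> is_subobj dY S ->
     exists (P : subrep X) (q : sdom P -> sdom S -> R), is_pullback dX (Gmor dY f) S P q) /\
  (* --- eta_(X,d) lands in Sub(G(X,d)) and reflects (and preserves) the order --- *)
  (forall (X : Type) (dX : X -> X -> R) (phi : X -> R),
     is_cmet1 dX -> CMT dX phi -> is_subobj dX (eta dX phi)) /\
  (forall (X : Type) (dX : X -> X -> R) (phi psi : X -> R),
     is_cmet1 dX -> CMT dX phi -> CMT dX psi ->
     (sq phi psi <-> sub_le (eta dX phi) (eta dX psi))) /\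
  (* --- eta is pseudonatural: eta_X(psi o f) = (G f)^*(eta_Y psi) --- *)
  (forall (X Y : Type) (dX : X -> X -> R) (dY : Y -> Y -> R) (f : X -> Y) (psi : Y -> R),
     is_cmet1 dX -> is_cmet1 dY -> unif_cont dX dY f -> CMT dY psi ->
     exists q : X -> Y -> R,
       is_pullback dX (Gmor dY f) (eta dY psi) (eta dX (fun x => psi (f x))) q) /\
  (* --- preservation of top and binary meets (top = 0, meet = max) --- *)
  (forall (X : Type) (dX : X -> X -> R) (S : subrep X),
     is_cmet1 dX -> is_subobj dX S -> sub_le S (eta dX (fun _ => 0))) /\
  (forall (X : Type) (dX : X -> X -> R) (phi psi : X -> R),
     is_cmet1 dX -> CMT dX phi -> CMT dX psi ->
     sub_le (eta dX (fun x => Rmax (phi x) (psi x))) (eta dX phi) /\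
     sub_le (eta dX (fun x => Rmax (phi x) (psi x))) (eta dX psi) /\
     forall S : subrep X, is_subobj dX S ->
       sub_le S (eta dX phi) -> sub_le S (eta dX psi) ->
       sub_le S (eta dX (fun x => Rmax (phi x) (psi x)))) /\
  (* --- preservation of bottom and binary joins (bottom = 1, join = min) --- *)
  (forall (X : Type) (dX : X -> X -> R) (S : subrep X),
     is_cmet1 dX -> is_subobj dX S -> sub_le (eta dX (fun _ => 1)) S) /\
  (forall (X : Type) (dX : X -> X -> R) (phi psi : X -> R),
     is_cmet1 dX -> CMT dX phi -> CMT dX psi ->
     sub_le (eta dX phi) (eta dX (fun x => Rmin (phi x) (psi x))) /\
     sub_le (eta dX psi) (eta dX (fun x => Rmin (phi x) (psi x))) /\
     forall S : subrep X, is_subobj dX S ->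
       sub_le (eta dX phi) S -> sub_le (eta dX psi) S ->
       sub_le (eta dX (fun x => Rmin (phi x) (psi x))) S) /\
  (* --- preservation of exists along projections (exists = inf over fibres):
         eta_X(exists phi) is the value at eta(phi) of the left adjoint
         to pullback along G(pi) --- *)
  (forall (X Y : Type) (dX : X -> X -> R) (dY : Y -> Y -> R) (phi : X * Y -> R),
     is_cmet1 dX -> is_cmet1 dY -> CMT (dprod dX dY) phi ->
     forall (S : subrep X) (P : subrep (X * Y)) (q : sdom P -> sdom S -> R),
       is_subobj dX S -> is_pullback (dprod dX dY) (Gmor dX (@fst X Y)) S P q ->
       (sub_le (eta (dprod dX dY) phi) P <->
        sub_le (eta dX (fun x => inf01 (fun y : Y => phi (x, y)))) S)) /\
  (* --- preservation of forall along projections (forall = sup over fibres):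
         eta_X(forall phi) is the value at eta(phi) of the right adjoint
         to pullback along G(pi) --- *)
  (forall (X Y : Type) (dX : X -> X -> R) (dY : Y -> Y -> R) (phi : X * Y -> R),
     is_cmet1 dX -> is_cmet1 dY -> CMT (dprod dX dY) phi ->
     forall (S : subrep X) (P : subrep (X * Y)) (q : sdom P -> sdom S -> R),
       is_subobj dX S -> is_pullback (dprod dX dY) (Gmor dX (@fst X Y)) S P q ->
       (sub_le P (eta (dprod dX dY) phi) <->
        sub_le S (eta dX (fun x => sup01 (fun y : Y => phi (x, y)))))) /\
  (* --- preservation of equality: eta_(X x X)(d) is the diagonal subobject --- *)
  (forall (X : Type) (dX : X -> X -> R),
     is_cmet1 dX ->
     sub_le (eta (dprod dX dX) (fun p => dX (fst p) (snd p))) (diag_sub dX) /\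
     sub_le (diag_sub dX) (eta (dprod dX dX) (fun p => dX (fst p) (snd p)))).
Proof.
  split; [intros X dX [HX _]; apply met_per; auto|].
  split; [intros X Y dX dY f [HX _] [HY _] Hf; apply Gmor_mor; auto|].
  split; [intros X dX _ e He; exists e; split; auto|].
  split; [intros X Y Z dX dY dZ f g _ [HY _] [HZ _] _ _; apply G_comp; auto|].
  split; [intros; apply G_full; auto|].
  split; [intros X Y dX dY f g _ [HY _] _ _ H; exact (G_faithful dX dY f g HY H)|].
  split; [exact terminal|].
  split; [intros X Y dX dY [HX _] [HY _]; apply product; auto|].
  split; [intros X Y dX dY f S [HX _] [HY _] Hf [HSp HSm]; do 2 eexists; eapply Pb_pullback; eauto; apply HSm|].
  split; [intros X dX phi [HX _] Hphi; apply eta_subobj; auto|].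
  split; [intros X dX phi psi [HX _] Hphi Hpsi; apply eta_le; auto|].
  split; [intros X Y dX dY f psi [HX _] [HY _] Hf Hpsi; eexists; exact (pb_eta dX dY HX HY f Hf psi Hpsi)|].
  split; [intros X dX S [HX _] [HSp HSm]; apply (partB2 dX (fun _ => 0) S HX ltac:(intros; lra) ltac:(apply HSm)); apply sqE; intros; apply nul_const0|].
  split.
  { intros X dX phi psi [HX _] Hphi Hpsi. assert (Hm := cmt_max dX phi psi Hphi Hpsi).
    split; [apply eta_le; auto; apply sq_pw; intro; apply Rmax_l|].
    split; [apply eta_le; auto; apply sq_pw; intro; apply Rmax_r|].
    intros S [HSp HSm] H1 H2. assert (Sm : is_permor (srel S) dX (smor S)) by apply HSm.
    apply (partB2 dX _ S HX ltac:(apply Hm) Sm).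
    assert (A1 := partB1 dX phi S HX Hphi Sm H1). assert (A2 := partB1 dX psi S HX Hpsi Sm H2).
    apply sqE; intros x Hx. apply nul_max; [exact (sq_use _ _ _ A1 Hx)|exact (sq_use _ _ _ A2 Hx)]. }
  split.
  { intros X dX S [HX _] [HSp HSm]. assert (Sm : is_permor (srel S) dX (smor S)) by apply HSm.
    apply (partA2 dX _ S HX (cmt_const dX 1 ltac:(lra)) Sm (mono_inj _ _ _ HSp HSm)).
    apply sqE; intros z Hz. exfalso; exact (nul_one_false Hz). }
  split.
  { intros X dX phi psi [HX _] Hphi Hpsi. assert (Hm := cmt_min dX phi psi Hphi Hpsi).
    split; [apply eta_le; auto; apply sq_pw; intro; apply Rmin_l|].
    split; [apply eta_le; auto; apply sq_pw; intro; apply Rmin_r|].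
    intros S [HSp HSm] H1 H2. assert (Sm : is_permor (srel S) dX (smor S)) by apply HSm.
    apply (partA2 dX _ S HX Hm Sm (mono_inj _ _ _ HSp HSm)).
    apply sq_min; [exact (partA1 dX phi S HX Hphi Sm H1)|exact (partA1 dX psi S HX Hpsi Sm H2)]. }
  split; [intros; eapply thm_exists; eauto|].
  split; [intros; eapply thm_forall; eauto|].
  intros; apply thm_eq; auto.
Qed.
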